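(* Let $X \subseteq \mathbb{Z}^3$ be a lattice-convex set with $\Delta_3 \subseteq X \subseteq T_3$, where $\Delta_3 = \{0,e_1,e_2,e_3\}$ and $T_3 = \{(x_1,x_2,x_3) \in \mathbb{R}^3 : x_1 \le 1, x_2 \le 1, x_3 \le 1, x_1+x_2+x_3 \ge 0\}$. If $\mathrm{conv}(\Delta_3)$ is a simplex of maximal volume in $\mathrm{conv}(X)$, then $X$ is unimodularly equivalent to one of the four sets whose elements are the columns of the following matrices: $\begin{pmatrix} 0&1&0&0\\0&0&1&0\\0&0&0&1\end{pmatrix}$, $\begin{pmatrix} 0&1&0&0&-1\\0&0&1&0&0\\0&0&0&1&1\end{pmatrix}$, $\begin{pmatrix} 0&1&0&0&-1&-1\\0&0&1&0&0&1\\0&0&0&1&1&0\end{pmatrix}$, $\begin{pmatrix} 0&1&0&0&-1&0\\0&0&1&0&0&-1\\0&0&0&1&1&1\end{pmatrix}$. Moreover, each of these four sets $X'$ satisfies $\mathrm{rc}_\ell(X') = \mathrm{rc}(X') = 4$.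
   Context: A set $X \subseteq \mathbb{Z}^d$ is lattice-convex if $\mathrm{conv}(X) \cap \mathbb{Z}^d = X$. Two sets $X, X' \subseteq \mathbb{R}^d$ are unimodularly equivalent if $X = UX' + t$ for some $U \in \mathbb{Z}^{d\times d}$ with $|\det U| = 1$ and some $t \in \mathbb{Z}^d$. $\mathrm{rc}(X)$ is the smallest number of facets of a polyhedron $P$ with $P \cap \mathbb{Z}^d = X$. For $Y \subseteq \mathbb{Z}^d$, $\mathrm{rc}(X,Y)$ is the smallest number of inequalities in a linear system $Ax \le b$ satisfied by all points of $X$ and such that each point of $Y\setminus X$ violates at least one inequality; with $B_t = [-t,t]^d\cap\mathbb{Z}^d$, $\mathrm{rc}_\ell(X) = \max_{t\in\mathbb{Z}_{>0}} \mathrm{rc}(X,B_t)$. *)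

(* Defs.v *)
From HB Require Import structures.
From mathcomp Require Import all_boot all_order all_algebra.
From mathcomp Require Import reals.
Unset Printing Implicit Defensive.
Import Order.TTheory GRing.Theory Num.Theory.
Local Open Scope ring_scope.

Definition zpt := 'cV[int]_3.
Definition zset := zpt -> Prop.

Definition toR (R : numDomainType) (z : zpt) : 'cV[R]_3 :=
  map_mx (fun a : int => a%:~R) z.

Definition in_conv (R : realType) (X : zset) (p : 'cV[R]_3) : Prop :=
  exists (n : nat) (pts : 'I_n -> zpt) (w : 'I_n -> R),
    [/\ forall i, X (pts i), forall i, 0 <= w i, \sum_i w i = 1 &
        p = \sum_i w i *: toR R (pts i)].

Definition lattice_convex (R : realType) (X : zset) : Prop :=
  forall z : zpt, @in_conv R X (toR R z) <-> X z.

Definition Delta3 (z : zpt) : Prop := z = 0 \/ exists i : 'I_3, z = delta_mx i 0.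

Definition T3 (z : zpt) : Prop :=
  (forall i : 'I_3, z i 0 <= 1) /\ 0 <= \sum_(i < 3) z i 0.

Definition simplex_volume (R : realType) (v : 'I_4 -> 'cV[R]_3) : R :=
  `|\det (\matrix_(i < 3, j < 3) (v (lift ord0 j) i 0 - v ord0 i 0))| / 6%:R.

Definition delta_vertices (R : realType) (k : 'I_4) : 'cV[R]_3 :=
  if unlift ord0 k is Some j then delta_mx j 0 else 0.

Definition max_vol_simplex (R : realType) (X : zset) (v : 'I_4 -> 'cV[R]_3) : Prop :=
  (forall k, @in_conv R X (v k)) /\
  forall w : 'I_4 -> 'cV[R]_3, (forall k, @in_conv R X (w k)) ->
    @simplex_volume R w <= @simplex_volume R v.

Definition unimod_equiv (X X' : zset) : Prop :=
  exists (U : 'M[int]_3) (t : zpt), `|\det U| = 1 /\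
    forall x, X x <-> exists2 x', X' x' & x = U *m x' + t.

Definition mkpt (a b c : int) : zpt := \col_(i < 3) nth 0 [:: a; b; c] i.

Definition S1 : seq zpt := [:: mkpt 0 0 0; mkpt 1 0 0; mkpt 0 1 0; mkpt 0 0 1].
Definition S2 : seq zpt := S1 ++ [:: mkpt (-1) 0 1].
Definition S3 : seq zpt := S1 ++ [:: mkpt (-1) 0 1; mkpt (-1) 1 0].
Definition S4 : seq zpt := S1 ++ [:: mkpt (-1) 0 1; mkpt 0 (-1) 1].

Definition seqset (s : seq zpt) : zset := fun z => z \in s.

Definition separates (R : realType) (X Y : zset) (m : nat) : Prop :=
  exists (A : 'M[R]_(m, 3)) (b : 'cV[R]_m),
    (forall x, X x -> forall i, (A *m toR R x) i 0 <= b i 0) /\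
    (forall y, Y y -> ~ X y -> exists i, b i 0 < (A *m toR R y) i 0).

Definition rc_rel_is (R : realType) (X Y : zset) (k : nat) : Prop :=
  @separates R X Y k /\ forall m, (m < k)%N -> ~ @separates R X Y m.

Definition rc_is (R : realType) (X : zset) (k : nat) : Prop :=
  @rc_rel_is R X (fun _ => True) k.

Definition box (t : nat) : zset :=
  fun z => forall i : 'I_3, - (t%:Z) <= z i 0 <= t%:Z.

(* rc_l(X) = max_{t > 0} rc(X, B_t) = k *)
Definition rcl_is (R : realType) (X : zset) (k : nat) : Prop :=
  (exists t, (0 < t)%N /\ @rc_rel_is R X (box t) k) /\
  (forall t, (0 < t)%N -> exists m, (m <= k)%N /\ @rc_rel_is R X (box t) m).

(* Main.v *)
Require Import Defs.
From HB Require Import structures.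
From mathcomp Require Import all_boot all_order all_algebra.
From mathcomp Require Import reals.
From mathcomp Require Import boolp.
From mathcomp Require Import ring lra zify.
Import Order.TTheory GRing.Theory Num.Theory.
Local Open Scope ring_scope.

Lemma det33 (R : comNzRingType) (A : 'M[R]_3) :
  let a i j := A (inord i) (inord j) in
  \det A = a 0%N 0%N * (a 1%N 1%N * a 2%N 2%N - a 1%N 2%N * a 2%N 1%N)
         - a 0%N 1%N * (a 1%N 0%N * a 2%N 2%N - a 1%N 2%N * a 2%N 0%N)
         + a 0%N 2%N * (a 1%N 0%N * a 2%N 1%N - a 1%N 1%N * a 2%N 0%N).
Proof.
move=> a.
have AE : forall i j, A i j = a i j by move=> i j; rewrite /a !inord_val.
rewrite (expand_det_row _ 0) !big_ord_recl big_ord0 /cofactor.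
rewrite !(expand_det_row _ 0) !big_ord_recl !big_ord0 /cofactor !det_mx11.
rewrite !mxE !AE /= !expr0 !expr1 ?expr2.
ring.
Qed.

Definition tri := (int * int * int)%type.
Definition tr (z : zpt) : tri := (z (inord 0) 0, z (inord 1) 0, z (inord 2) 0).
Definition pt (t : tri) : zpt := mkpt t.1.1 t.1.2 t.2.

Lemma ptK t : tr (pt t) = t.
Proof. by case: t => [[a b] c]; rewrite /tr /pt /mkpt !mxE !inordK. Qed.

Lemma trK z : pt (tr z) = z.
Proof.
apply/matrixP => i j; rewrite /pt /mkpt /tr mxE /= (ord1 j).
case: i => [[|[|[|//]]]] Hi /=; congr (z _ _); apply: val_inj; by rewrite /= inordK.
Qed.

Lemma tr_inj : injective tr.
Proof. by move=> x y E; rewrite -(trK x) E trK. Qed.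

Definition det3t (p q r s : tri) : int :=
  let: (p1, p2, p3) := p in
  let: (q1, q2, q3) := q in
  let: (r1, r2, r3) := r in
  let: (s1, s2, s3) := s in
  (q1 - p1) * ((r2 - p2) * (s3 - p3) - (s2 - p2) * (r3 - p3))
  - (r1 - p1) * ((q2 - p2) * (s3 - p3) - (s2 - p2) * (q3 - p3))
  + (s1 - p1) * ((q2 - p2) * (r3 - p3) - (r2 - p2) * (q3 - p3)).

Lemma in_conv_pt (R : realType) (X : zset) z : X z -> @in_conv R X (toR R z).
Proof.
move=> Xz; exists 1%N, (fun _ => z), (fun _ => 1); split => //.
  by rewrite big_ord1.
by rewrite big_ord1 scale1r.
Qed.

Lemma vol_delta (R : realType) : @simplex_volume R (delta_vertices R) = 6%:R^-1 :> R.
Proof.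
rewrite /simplex_volume.
have -> : (\matrix_(i < 3, j < 3) (delta_vertices R (lift ord0 j) i 0
            - delta_vertices R ord0 i 0)) = 1%:M.
  apply/matrixP => i j; rewrite !mxE /delta_vertices liftK unlift_none !mxE.
  by rewrite subr0 eqxx andbT eq_sym.
by rewrite det1 normr1 mul1r.
Qed.

Lemma liftin k : (k < 3)%N -> nat_of_ord (lift ord0 (inord k : 'I_3)) = k.+1.
Proof. by move=> Hk; rewrite /= /bump /= inordK. Qed.

Lemma VOL (R : realType) (X : zset) p q r s :
  @max_vol_simplex R X (delta_vertices R) -> X p -> X q -> X r -> X s ->
  `|det3t (tr p) (tr q) (tr r) (tr s)| <= 1.
Proof.
move=> [_ Hmax] Xp Xq Xr Xs.
pose w := fun k : 'I_4 => toR R (nth 0 [:: p; q; r; s] k).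
have Hw : forall k, @in_conv R X (w k).
  move=> k; apply: in_conv_pt; case: k => [[|[|[|[|//]]]] Hk] //=.
pose M := (\matrix_(i < 3, j < 3)
   (nth (0 : zpt) [:: p; q; r; s] (lift (ord0 : 'I_4) j) i 0 - nth (0 : zpt) [:: p; q; r; s] (ord0 : 'I_4) i 0) : 'M[int]_3).
have HM : (\matrix_(i < 3, j < 3) (w (lift ord0 j) i 0 - w ord0 i 0)) = map_mx (fun a : int => a%:~R) M.
  by apply/matrixP => i j; rewrite !mxE rmorphB.
have := Hmax w Hw; rewrite vol_delta /simplex_volume HM det_map_mx -intr_norm.
rewrite -[X in _ <= X]mul1r ler_pM2r ?invr_gt0 ?ltr0n // => H.
have E : \det M = det3t (tr p) (tr q) (tr r) (tr s).
  by rewrite det33 !mxE !liftin //=.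
by rewrite -E -(ler_int R).
Qed.

Definition mk (a b c : int) : tri := (a, b, c).
Definition D3t : seq tri := [:: mk 0 0 0; mk 1 0 0; mk 0 1 0; mk 0 0 1].
Definition C12 : seq tri :=
  [:: mk (-1) 0 1; mk (-1) 1 0; mk (-1) 1 1; mk 0 (-1) 1; mk 0 1 (-1); mk 0 1 1;
      mk 1 (-1) 0; mk 1 (-1) 1; mk 1 0 (-1); mk 1 0 1; mk 1 1 (-1); mk 1 1 0].

Fixpoint allsubs (s : seq tri) : seq (seq tri) :=
  if s is x :: s' then [seq x :: l | l <- allsubs s'] ++ allsubs s' else [:: [::]].

Fixpoint combs (s : seq tri) (k : nat) : seq (seq tri) :=
  if k is k'.+1 then
    (if s is x :: s' then [seq x :: l | l <- combs s' k'] ++ combs s' k else [::])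
  else [:: [::]].

Definition Good (L : seq tri) : bool :=
  all (fun l => if l is [:: p; q; r; s] then `|det3t p q r s| <= 1 else true) (combs L 4).

Definition Sk (k : nat) : seq tri :=
  D3t ++ nth [::] [:: [::]; [:: mk (-1) 0 1]; [:: mk (-1) 0 1; mk (-1) 1 0];
                    [:: mk (-1) 0 1; mk 0 (-1) 1]] k.

Definition addt (x y : tri) : tri := (x.1.1 + y.1.1, x.1.2 + y.1.2, x.2 + y.2).
Definition subt (x y : tri) : tri := (x.1.1 - y.1.1, x.1.2 - y.1.2, x.2 - y.2).
Definition sclt (a : int) (x : tri) : tri := (a * x.1.1, a * x.1.2, a * x.2).
Definition aff (u1 u2 u3 t : tri) (x : tri) : tri :=
  addt (addt (addt (sclt x.1.1 u1) (sclt x.1.2 u2)) (sclt x.2 u3)) t.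

Definition seteq (L M : seq tri) := all (fun x => x \in M) L && all (fun x => x \in L) M.

Definition okq (L : seq tri) (k : nat) (q : seq tri) : bool :=
  if q is [:: a; b; c; d] then
    (`|det3t 0 (subt b a) (subt c a) (subt d a)| == 1) &&
    seteq L (map (aff (subt b a) (subt c a) (subt d a) a) (Sk k))
  else false.

Definition tuples4 (L : seq tri) : seq (seq tri) :=
  flatten [seq flatten [seq flatten [seq [seq [:: a; b; c; d] | d <- L] | c <- L] | b <- L] | a <- L].

Definition okT (L : seq tri) : bool :=
  has (fun k => has (okq L k) (tuples4 L)) (iota 0 4).

Lemma classify_comp :
  all (fun L => if Good (D3t ++ L) then okT (D3t ++ L) else true) (allsubs C12).
Proof. vm_compute. reflexivity. Qed.

Lemma allsubs_filter (p : pred tri) s : [seq x <- s | p x] \in allsubs s.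
Proof.
elim: s => [|x s IH] //=; rewrite mem_cat; case: (p x).
  by rewrite (map_f (cons x) IH).
by rewrite IH orbT.
Qed.

Lemma combs_sub s k l : l \in combs s k -> all (fun x => x \in s) l.
Proof.
elim: s k l => [|x s IH] [|k] l //=; rewrite ?mem_seq1; try by move/eqP ->.
rewrite mem_cat => /orP [/mapP [l' Hl' ->]|Hl] /=.
  rewrite mem_head /=; apply/allP => y Hy; rewrite in_cons (allP (IH _ _ Hl')) ?orbT //.
by apply/allP => y Hy; rewrite in_cons (allP (IH _ _ Hl)) ?orbT.
Qed.

Lemma sum3 (x : zpt) : \sum_(i < 3) x i 0 = x (inord 0) 0 + x (inord 1) 0 + x (inord 2) 0.
Proof.
rewrite !big_ord_recl big_ord0 addr0 addrA.
have AE : forall i : 'I_3, x i 0 = x (inord i) 0 by move=> i; rewrite inord_val.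
by rewrite [x ord0 0]AE [x (lift _ _) 0]AE [x (lift _ (lift _ _)) 0]AE.
Qed.

Lemma Delta3_pt c : c \in D3t -> Delta3 (pt c).
Proof.
rewrite !inE => /or4P [] /eqP ->.
- by left; apply/matrixP => i j; rewrite !mxE; case: i => [[|[|[|]]]].
- right; exists (inord 0); apply/matrixP => i j; rewrite !mxE (ord1 j) eqxx andbT.
  by case: i => [[|[|[|]]] Hi] //=; rewrite -val_eqE /= inordK.
- right; exists (inord 1); apply/matrixP => i j; rewrite !mxE (ord1 j) eqxx andbT.
  by case: i => [[|[|[|]]] Hi] //=; rewrite -val_eqE /= inordK.
- right; exists (inord 2); apply/matrixP => i j; rewrite !mxE (ord1 j) eqxx andbT.
  by case: i => [[|[|[|]]] Hi] //=; rewrite -val_eqE /= inordK.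
Qed.

Lemma enum16 (a b c : int) : -1 <= a <= 1 -> -1 <= b <= 1 -> -1 <= c <= 1 ->
  0 <= a + b + c <= 2 -> mk a b c \in D3t ++ C12.
Proof.
move=> Ha Hb Hc Hs.
have Ea : a = -1 \/ a = 0 \/ a = 1 by lia.
have Eb : b = -1 \/ b = 0 \/ b = 1 by lia.
have Ec : c = -1 \/ c = 0 \/ c = 1 by lia.
move: Hs; clear -Ea Eb Ec.
case: Ea => [->|[->|->]]; case: Eb => [->|[->|->]]; case: Ec => [->|[->|->]];
  by vm_compute; intros; first [reflexivity | discriminate].
Qed.

Definition cmp3 (x : tri) (i : nat) : int := nth 0 [:: x.1.1; x.1.2; x.2] i.
Definition colm (u1 u2 u3 : tri) : 'M[int]_3 :=
  \matrix_(i < 3, j < 3) cmp3 (nth 0 [:: u1; u2; u3] j) i.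

Lemma det_colm u1 u2 u3 : \det (colm u1 u2 u3) = det3t 0 u1 u2 u3.
Proof.
rewrite det33 !mxE !inordK //=.
case: u1 => [[a1 b1] c1]; case: u2 => [[a2 b2] c2]; case: u3 => [[a3 b3] c3].
rewrite /det3t /cmp3 /=. ring.
Qed.

Lemma tr_aff u1 u2 u3 t x :
  tr (colm u1 u2 u3 *m x + pt t) = aff u1 u2 u3 t (tr x).
Proof.
pose xx k := x (inord k) 0.
have AE : forall i : 'I_3, x i 0 = xx i by move=> i; rewrite /xx inord_val.
rewrite /tr !mxE !big_ord_recl !big_ord0 !mxE !AE !inordK //= /bump /=.
case: u1 => [[a1 b1] c1]; case: u2 => [[a2 b2] c2]; case: u3 => [[a3 b3] c3].
case: t => [[t1 t2] t3].
rewrite /aff /addt /sclt /cmp3 /xx /=.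
congr (_, _, _); ring.
Qed.

Lemma S_eq : [:: S1; S2; S3; S4] = [seq map pt (Sk k) | k <- iota 0 4].
Proof. by []. Qed.

Theorem classify (R : realType) (X : zset) :
  (forall z, Delta3 z -> X z) ->
  (forall z, X z -> T3 z) ->
  @max_vol_simplex R X (delta_vertices R) ->
  exists2 k, (k < 4)%N & unimod_equiv X (seqset (map pt (Sk k))).
Proof.
move=> HD HT Hmax.
pose b := fun c : tri => `[< X (pt c) >].
pose XL := D3t ++ [seq c <- C12 | b c].
have Xpt : forall c, c \in XL -> X (pt c).
  move=> c; rewrite mem_cat => /orP [/Delta3_pt/HD //|].
  by rewrite mem_filter => /andP [/asboolP].
have XD : forall c, c \in D3t -> X (pt c) by move=> c /Delta3_pt/HD.
have XiffL : forall x, X x <-> tr x \in XL.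
  move=> x; split; last by move/Xpt; rewrite trK.
  move=> Xx.
  have V := fun p q r (Hp : p \in D3t) (Hq : q \in D3t) (Hr : r \in D3t) =>
     @VOL R X (pt p) (pt q) (pt r) x Hmax (XD _ Hp) (XD _ Hq) (XD _ Hr) Xx.
  have V1 := V (mk 0 0 0) (mk 1 0 0) (mk 0 1 0) isT isT isT.
  have V2 := V (mk 0 0 0) (mk 1 0 0) (mk 0 0 1) isT isT isT.
  have V3 := V (mk 0 0 0) (mk 0 1 0) (mk 0 0 1) isT isT isT.
  have V4 := V (mk 1 0 0) (mk 0 1 0) (mk 0 0 1) isT isT isT.
  move: V1 V2 V3 V4; rewrite !ptK /det3t /tr /mk !ler_norml.
  have [HT1 HT2] := HT x Xx.
  move: HT2; rewrite sum3.
  have h0 := HT1 (inord 0); have h1 := HT1 (inord 1); have h2 := HT1 (inord 2).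
  move: h0 h1 h2.
  set x0 := x (inord 0) 0; set x1 := x (inord 1) 0; set x2 := x (inord 2) 0.
  move=> h0 h1 h2 HS V1 V2 V3 V4.
  have H16 : mk x0 x1 x2 \in D3t ++ C12 by apply: enum16; lia.
  move: H16; rewrite mem_cat => /orP [HD3|HC].
    by rewrite mem_cat HD3.
  rewrite mem_cat mem_filter HC andbT /b; apply/orP; right; apply/asboolP.
  by rewrite /mk -/(tr x) trK.
have good : Good XL.
  apply/allP => l /combs_sub.
  case: l => [|p [|q [|r [|s [|]]]]] //= /and5P [Hp Hq Hr Hs _].
  have := @VOL R X (pt p) (pt q) (pt r) (pt s) Hmax (Xpt _ Hp) (Xpt _ Hq) (Xpt _ Hr) (Xpt _ Hs).
  by rewrite !ptK.
have := allP classify_comp _ (allsubs_filter b C12); rewrite -/XL good.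
move=> /hasP [k Hk /hasP [q _ Hok]].
exists k; first by move: Hk; rewrite mem_iota.
case: q Hok => [|a [|u1 [|u2 [|u3 [|]]]]] //; rewrite /okq => /andP [/eqP Hdet /andP [H1 H2]].
exists (colm (subt u1 a) (subt u2 a) (subt u3 a)), (pt a); split.
  by rewrite det_colm.
move=> x; split.
  move/XiffL => Hx; have := allP H1 _ Hx; case/seq.mapP => y Hy E.
  exists (pt y); first by rewrite /seqset (map_f pt Hy).
  by apply: tr_inj; rewrite tr_aff ptK.
move=> [x' Hx' ->]; apply/XiffL.
move: Hx'; rewrite /seqset => /seq.mapP [y Hy ->].
by apply: (allP H2 _); rewrite tr_aff ptK (map_f _ Hy).
Qed.

Definition dott (u x : tri) : int := u.1.1 * x.1.1 + u.1.2 * x.1.2 + u.2 * x.2.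

Definition Amat (R : realType) (L : seq (tri * int)) : 'M[R]_(size L, 3) :=
  \matrix_(i < size L, j < 3) (cmp3 (nth (0, 0) L i).1 j)%:~R.
Definition bvec (R : realType) (L : seq (tri * int)) : 'cV[R]_(size L) :=
  \col_(i < size L) ((nth (0, 0) L i).2)%:~R.

Lemma Arow (R : realType) L i y :
  (Amat R L *m toR R y) i 0 = (dott (nth (0, 0) L i).1 (tr y))%:~R.
Proof.
pose yy k := y (inord k) 0.
have AE : forall j : 'I_3, y j 0 = yy j by move=> j; rewrite /yy inord_val.
rewrite !mxE !big_ord_recl big_ord0 !mxE !AE /= /bump /=.
case: (nth _ L i) => [[[a b] c] d]; rewrite /dott /tr /cmp3 /yy /=.
rewrite !rmorphD !rmorphM /=. ring.
Qed.

Lemma upper (R : realType) (L : seq (tri * int)) (S : seq zpt) (Y : zset) :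
  (forall x, x \in S -> all (fun q => dott q.1 (tr x) <= q.2) L) ->
  (forall y : zpt, all (fun q => dott q.1 (tr y) <= q.2) L -> y \in S) ->
  @separates R (seqset S) Y (size L).
Proof.
move=> H1 H2; exists (Amat R L), (bvec R L); split.
  move=> x Hx i; rewrite Arow mxE ler_int.
  by have := allP (H1 x Hx) _ (mem_nth (0, 0) (ltn_ord i)).
move=> y _ Hy.
case: (boolP [exists i, bvec R L i 0 < (Amat R L *m toR R y) i 0]).
  by move/existsP.
move/existsPn => H; exfalso; apply: Hy; apply: H2; apply/allP => q Hq.
have Hi : (index q L < size L)%N by rewrite index_mem.
have := H (Ordinal Hi); rewrite Arow mxE /= nth_index // -leNgt ler_int.
by [].
Qed.

Definition L0 : seq (tri * int) := [:: (mk (-1) 0 0, 0); (mk 0 (-1) 0, 0); (mk 0 0 (-1), 0); (mk 1 1 1, 1)].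

Lemma up0_in x : x \in map pt (Sk 0) -> all (fun q => dott q.1 (tr x) <= q.2) L0.
Proof.
case/seq.mapP => y Hy ->; rewrite ptK; move: y Hy; apply/allP.
by vm_compute.
Qed.

Lemma up0_out y : all (fun q => dott q.1 (tr y) <= q.2) L0 -> y \in map pt (Sk 0).
Proof.
rewrite -[y]trK; move: (tr y) => [[a b] c]; rewrite ptK => H; rewrite /= /dott /= in H.
apply: map_f.
have Ea : a = 0 \/ a = 1 by lia.
have Eb : b = 0 \/ b = 1 by lia.
have Ec : c = 0 \/ c = 1 by lia.
move: H; clear -Ea Eb Ec.
case: Ea => [->|->]; case: Eb => [->|->]; case: Ec => [->|->];
  by vm_compute; intros; first [reflexivity | discriminate | (repeat match goal with H : _ /\ _ |- _ => destruct H end; discriminate)].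
Qed.

Definition L1 : seq (tri * int) := [:: (mk (-2) (-2) (-2), 0); (mk (-1) 2 1, 2); (mk 1 (-2) 1, 1); (mk 2 2 (-1), 2)].

Lemma up1_in x : x \in map pt (Sk 1) -> all (fun q => dott q.1 (tr x) <= q.2) L1.
Proof.
case/seq.mapP => y Hy ->; rewrite ptK; move: y Hy; apply/allP.
by vm_compute.
Qed.

Lemma up1_out y : all (fun q => dott q.1 (tr y) <= q.2) L1 -> y \in map pt (Sk 1).
Proof.
rewrite -[y]trK; move: (tr y) => [[a b] c]; rewrite ptK => H; rewrite /= /dott /= in H.
apply: map_f.
have Ea : a = (-1) \/ a = 0 \/ a = 1 by lia.
have Eb : b = 0 \/ b = 1 by lia.
have Ec : c = 0 \/ c = 1 by lia.
move: H; clear -Ea Eb Ec.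
case: Ea => [->|[->|->]]; case: Eb => [->|->]; case: Ec => [->|->];
  by vm_compute; intros; first [reflexivity | discriminate | (repeat match goal with H : _ /\ _ |- _ => destruct H end; discriminate)].
Qed.

Definition L2 : seq (tri * int) := [:: (mk (-2) (-2) (-2), 0); (mk (-1) 2 2, 3); (mk 1 (-2) 1, 1); (mk 2 2 (-1), 2)].

Lemma up2_in x : x \in map pt (Sk 2) -> all (fun q => dott q.1 (tr x) <= q.2) L2.
Proof.
case/seq.mapP => y Hy ->; rewrite ptK; move: y Hy; apply/allP.
by vm_compute.
Qed.

Lemma up2_out y : all (fun q => dott q.1 (tr y) <= q.2) L2 -> y \in map pt (Sk 2).
Proof.
rewrite -[y]trK; move: (tr y) => [[a b] c]; rewrite ptK => H; rewrite /= /dott /= in H.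
apply: map_f.
have Ea : a = (-1) \/ a = 0 \/ a = 1 by lia.
have Eb : b = 0 \/ b = 1 by lia.
have Ec : c = 0 \/ c = 1 by lia.
move: H; clear -Ea Eb Ec.
case: Ea => [->|[->|->]]; case: Eb => [->|->]; case: Ec => [->|->];
  by vm_compute; intros; first [reflexivity | discriminate | (repeat match goal with H : _ /\ _ |- _ => destruct H end; discriminate)].
Qed.

Definition L3 : seq (tri * int) := [:: (mk (-3) (-3) (-2), 1); (mk (-3) 3 1, 4); (mk 0 (-1) (-3), 0); (mk 3 1 3, 3)].

Lemma up3_in x : x \in map pt (Sk 3) -> all (fun q => dott q.1 (tr x) <= q.2) L3.
Proof.
case/seq.mapP => y Hy ->; rewrite ptK; move: y Hy; apply/allP.
by vm_compute.
Qed.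

Lemma up3_out y : all (fun q => dott q.1 (tr y) <= q.2) L3 -> y \in map pt (Sk 3).
Proof.
rewrite -[y]trK; move: (tr y) => [[a b] c]; rewrite ptK => H; rewrite /= /dott /= in H.
apply: map_f.
have Ea : a = (-1) \/ a = 0 \/ a = 1 by lia.
have Eb : b = (-1) \/ b = 0 \/ b = 1 by lia.
have Ec : c = 0 \/ c = 1 by lia.
move: H; clear -Ea Eb Ec.
case: Ea => [->|[->|->]]; case: Eb => [->|[->|->]]; case: Ec => [->|->];
  by vm_compute; intros; first [reflexivity | discriminate | (repeat match goal with H : _ /\ _ |- _ => destruct H end; discriminate)].
Qed.

Section Lin.
Variable R : realType.
Variables a1 a2 a3 : R.
Definition fa (x : tri) : R := a1 * x.1.1%:~R + a2 * x.1.2%:~R + a3 * x.2%:~R.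

Fixpoint lincomb (ns : seq nat) (vs : seq tri) : tri :=
  match ns, vs with
  | n :: ns', v :: vs' => addt (sclt n%:Z v) (lincomb ns' vs')
  | _, _ => (0, 0, 0)
  end.
Fixpoint wsum (ns : seq nat) (vs : seq tri) : R :=
  match ns, vs with
  | n :: ns', v :: vs' => n%:R * fa v + wsum ns' vs'
  | _, _ => 0
  end.

Lemma fa_lincomb ns vs : fa (lincomb ns vs) = wsum ns vs.
Proof.
elim: ns vs => [|n ns IH] [|v vs] //=; try by rewrite /fa /= !mulr0 !addr0.
rewrite -IH; case: v => [[x y] z]; case: (lincomb ns vs) => [[p q] r].
rewrite /fa /addt /sclt /= !rmorphD !rmorphM /=.
rewrite -[n%:R]/((n%:Z)%:~R : R). ring.
Qed.

Lemma wsum0 ns vs : sumn ns = 0%N -> wsum ns vs = 0.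
Proof.
elim: ns vs => [|m ms IH'] [|w ws] //= /eqP.
rewrite addn_eq0 => /andP [/eqP -> /eqP Hms].
by rewrite mul0r add0r IH'.
Qed.

Lemma wsum_gt ns vs (b : R) : size ns = size vs -> (0 < sumn ns)%N ->
  (forall v, v \in vs -> b < fa v) -> (sumn ns)%:R * b < wsum ns vs.
Proof.
elim: ns vs => [|n ns IH] [|v vs] //= [Hs] Hpos Hv.
have Hv0 : b < fa v by apply: Hv; rewrite mem_head.
have Hv' : forall w, w \in vs -> b < fa w by move=> w Hw; apply: Hv; rewrite in_cons Hw orbT.
rewrite natrD mulrDl.
case: (posnP (sumn ns)) => Hns.
  have -> : wsum ns vs = 0 by apply: wsum0.
  rewrite Hns mul0r addr0; move: Hpos; rewrite Hns addn0 => Hn.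
  by rewrite addr0 ltr_pM2l // ltr0n.
have := IH vs Hs Hns Hv'.
case: (posnP n) => Hn.
  by rewrite Hn !mul0r !add0r.
move=> H; apply: ltr_leD; [by rewrite ltr_pM2l // ltr0n | exact: ltW].
Qed.

Lemma wsum_le ns vs (b : R) : size ns = size vs ->
  (forall v, v \in vs -> fa v <= b) -> wsum ns vs <= (sumn ns)%:R * b.
Proof.
elim: ns vs => [|n ns IH] [|v vs] //=; first by move=> _ _; rewrite mul0r.
move=> [Hs] Hv.
rewrite natrD mulrDl; apply: lerD.
  by rewrite ler_wpM2l // Hv // mem_head.
by apply: IH => // w Hw; apply: Hv; rewrite in_cons Hw orbT.
Qed.

End Lin.
Arguments fa {R}.
Arguments wsum {R}.
Arguments wsum_gt {R}.
Arguments wsum_le {R}.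
Arguments fa_lincomb {R}.

(* a certificate that conv(V) meets conv(S) *)
Definition badcert (S V : seq tri) (nv : seq nat) (Sv : seq tri) (ms : seq nat) : bool :=
  [&& size nv == size V, size ms == size Sv, all (fun s => s \in S) Sv,
      (0 < sumn nv)%N, sumn nv == sumn ms & lincomb nv V == lincomb ms Sv].

Lemma badcertP (R : realType) a1 a2 a3 (b : R) S V nv Sv ms :
  badcert S V nv Sv ms ->
  (forall s, s \in S -> fa a1 a2 a3 s <= b) ->
  ~ (forall v, v \in V -> b < fa a1 a2 a3 v).
Proof.
case/and5P => /eqP H1 /eqP H2 /allP H3 H4 /andP [/eqP H5 /eqP H6] HS HV.
have := wsum_gt a1 a2 a3 nv V b H1 H4 HV.
rewrite -fa_lincomb H6 fa_lincomb H5.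
have := wsum_le a1 a2 a3 ms Sv b H2 (fun v Hv => HS v (H3 v Hv)).
move=> Hle Hlt; have := lt_le_trans Hlt Hle; by rewrite ltxx.
Qed.

Definition mono (col : seq nat) (B : seq nat) : bool :=
  all (fun i => (i < size col)%N) B && all (fun i => nth 0%N col i == nth 0%N col (head 0%N B)) B.

Fixpoint ext (bad : seq (seq nat)) (col : seq nat) (k : nat) : bool :=
  has (mono col) bad ||
  (if k is k'.+1 then
     [&& ext bad (rcons col 0%N) k', ext bad (rcons col 1%N) k' & ext bad (rcons col 2%N) k']
   else false).

Lemma extP bad k : forall col, ext bad col k ->
  forall g : nat -> nat, (forall i, (g i < 3)%N) ->
  (forall i, (i < size col)%N -> g i = nth 0%N col i) ->
  exists2 B, B \in bad & all (fun i => g i == g (head 0%N B)) B.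
Proof.
elim: k => [|k IH] col /= H g Hg Hcol.
  move: H; rewrite orbF => /hasP [B HB /andP [H1 H2]].
  exists B => //; apply/allP => i Hi.
  have Hh : (head 0%N B < size col)%N.
    by case: B Hi H1 {HB H2} => [//|x B] _ /andP [].
  by rewrite Hcol ?(allP H1 _ Hi) // Hcol // (allP H2 _ Hi).
case/orP: H => [/hasP [B HB /andP [H1 H2]]|].
  exists B => //; apply/allP => i Hi.
  have Hh : (head 0%N B < size col)%N.
    by case: B Hi H1 {HB H2} => [//|x B] _ /andP [].
  by rewrite Hcol ?(allP H1 _ Hi) // Hcol // (allP H2 _ Hi).
move=> /and3P [H0 H1 H2].
have Hext : forall c, g (size col) = c ->
    (forall i, (i < size (rcons col c))%N -> g i = nth 0%N (rcons col c) i).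
  move=> c Hc i; rewrite size_rcons ltnS leq_eqVlt => /orP [/eqP ->|Hi].
    by rewrite nth_rcons ltnn eqxx.
  by rewrite nth_rcons Hi Hcol.
have := Hg (size col); case E: (g (size col)) => [|[|[|//]]] _.
- exact: IH H0 g Hg (Hext _ E).
- exact: IH H1 g Hg (Hext _ E).
- exact: IH H2 g Hg (Hext _ E).
Qed.


Inductive ctree := Leaf of nat | Node of nat & ctree & ctree & ctree.

Fixpoint lookup (asg : seq (nat * nat)) (i : nat) : option nat :=
  if asg is (v, c) :: asg' then (if i == v then Some c else lookup asg' i) else None.

Fixpoint chk (bad : seq (seq nat)) (asg : seq (nat * nat)) (T : ctree) : bool :=
  match T with
  | Leaf k => let B := nth [::] bad k in
      (k < size bad)%N && all (fun i => (lookup asg i != None) && (lookup asg i == lookup asg (head 0%N B))) B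
  | Node v t0 t1 t2 =>
      [&& chk bad ((v, 0%N) :: asg) t0, chk bad ((v, 1%N) :: asg) t1 & chk bad ((v, 2%N) :: asg) t2]
  end.

Lemma chkP bad T : forall asg, chk bad asg T ->
  forall g : nat -> nat, (forall i, (g i < 3)%N) ->
  (forall i c, lookup asg i = Some c -> g i = c) ->
  exists2 B, B \in bad & all (fun i => g i == g (head 0%N B)) B.
Proof.
elim: T => [k|v t0 IH0 t1 IH1 t2 IH2] asg /=.
  move=> /andP [Hk HB] g Hg Hasg; exists (nth [::] bad k); first exact: mem_nth.
  apply/allP => i Hi; have /andP [H1 /eqP H2] := allP HB i Hi.
  case E: (lookup asg i) H1 H2 => [c|//] _ E2.
  by rewrite (Hasg _ _ E) (Hasg _ c) // -E2.
move=> /and3P [H0 H1 H2] g Hg Hasg.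
have Hext : forall c, g v = c -> forall i c', lookup ((v, c) :: asg) i = Some c' -> g i = c'.
  move=> c Hc i c' /=; case: eqP => [-> [<-] //|_]; exact: Hasg.
have := Hg v; case E: (g v) => [|[|[|//]]] _.
- exact: IH0 _ H0 g Hg (Hext _ E).
- exact: IH1 _ H1 g Hg (Hext _ E).
- exact: IH2 _ H2 g Hg (Hext _ E).
Qed.

Lemma rowfa (R : realType) m (A : 'M[R]_(m, 3)) j y :
  (A *m toR R y) j 0 = fa (A j (inord 0)) (A j (inord 1)) (A j (inord 2)) (tr y).
Proof.
pose yy k := y (inord k) 0.
pose aa k := A j (inord k).
have AE : forall i : 'I_3, y i 0 = yy i by move=> i; rewrite /yy inord_val.
have AE' : forall i : 'I_3, A j i = aa i by move=> i; rewrite /aa inord_val.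
rewrite /fa /tr /= !mxE !big_ord_recl big_ord0 !mxE !AE !AE' /= /bump /= !inordK //=.
by rewrite addr0 addrA.
Qed.

Definition inbox (t : nat) (y : tri) : bool :=
  [&& - (t%:Z) <= y.1.1 <= t%:Z, - (t%:Z) <= y.1.2 <= t%:Z & - (t%:Z) <= y.2 <= t%:Z].

Lemma inboxP t y : inbox t y -> box t (pt y).
Proof.
case: y => [[a b] c] /and3P [H1 H2 H3] i; rewrite /pt /mkpt mxE.
by case: i => [[|[|[|]]] Hi] /=.
Qed.

Lemma pt_inj : injective pt.
Proof. by move=> x y E; rewrite -(ptK x) E ptK. Qed.

Definition perm3 (c x : nat) : nat := if x == c then 0%N else if x == 0%N then c else x.

Lemma perm3_inj c : injective (perm3 c).
Proof.
move=> x y; rewrite /perm3.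
case: (x =P c) => Hx; case: (y =P c) => Hy; case: (x =P 0%N) => Hx0;
  case: (y =P 0%N) => Hy0; lia.
Qed.

Lemma perm3_lt c x : (c < 3)%N -> (x < 3)%N -> (perm3 c x < 3)%N.
Proof. by rewrite /perm3; case: ifP => //; case: ifP. Qed.

Definition lowcert (S Ys : seq tri) (t : nat) (v0 : nat) (T : ctree)
   (badl : seq (seq nat * (seq nat * seq tri * seq nat))) : bool :=
  [&& all (fun y => inbox t y && (y \notin S)) Ys,
      all (fun c => all (fun i => (i < size Ys)%N) c.1 &&
                    badcert S (map (nth 0 Ys) c.1) c.2.1.1 c.2.1.2 c.2.2) badl &
      chk (map fst badl) [:: (v0, 0%N)] T].

Lemma lower (R : realType) S Ys t v0 T badl : lowcert S Ys t v0 T badl ->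
  forall m, (m < 4)%N -> ~ @separates R (seqset (map pt S)) (box t) m.
Proof.
case/and3P => HY Hbad Hext m Hm [A [b [Hval Hsep]]].
pose viol (y : tri) (j : 'I_m) := b j 0 < (A *m toR R (pt y)) j 0.
pose g0 (i : nat) : nat := if [pick j | viol (nth 0 Ys i) j] is Some j then val j else 0%N.
have Hg0 : forall i, (g0 i < 3)%N.
  move=> i; rewrite /g0; case: pickP => [j _|_] //; exact: leq_trans (ltn_ord j) _.
pose g i := perm3 (g0 v0) (g0 i).
have Hg : forall i, (g i < 3)%N by move=> i; apply: perm3_lt.
have Hg00 : g v0 = 0%N by rewrite /g /perm3 eqxx.
have := @chkP _ _ _ Hext g Hg.
case.
  by move=> i c /=; case: eqP => [-> [<-]|//].
move=> B /mapP [c Hc ->] Hmono.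
have /andP [Hidx Hcert] := allP Hbad c Hc.
have Hviol : forall i, i \in c.1 -> exists j, viol (nth 0 Ys i) j.
  move=> i Hi.
  have Hin : nth 0 Ys i \in Ys by rewrite mem_nth // (allP Hidx _ Hi).
  have /andP [Hb HS] := allP HY _ Hin.
  apply: Hsep; first exact: inboxP.
  rewrite /seqset => /mapP [y Hy /pt_inj E].
  by rewrite -E in Hy; rewrite Hy in HS.
case: c Hc Hidx Hcert Hmono Hviol => [idx cert] /= _ Hidx Hcert Hmono Hviol.
have Hsame : forall i, i \in idx -> g0 i = g0 (head 0%N idx).
  by move=> i Hi; apply: (@perm3_inj (g0 v0)); apply/eqP; rewrite (allP Hmono _ Hi).
have [i0 Hi0] : exists i0, i0 \in idx.
  case: cert Hcert => [[nv Sv] ms] /and5P [/eqP H1 _ _ H4 _].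
  case: idx {Hidx Hmono Hviol Hsame} H1 H4 => [|i idx'] /=.
    by case: nv => //=.
  by exists i; rewrite mem_head.
set h := head 0%N idx.
have Hh : h \in idx by rewrite /h; case: (idx) Hi0 => // i idx' _; rewrite mem_head.
have [j Hj Ej] : exists2 j, viol (nth 0 Ys h) j & g0 h = val j.
  rewrite /g0; case: pickP => [j Hj|H0]; first by exists j.
  by have [j' Hj'] := Hviol _ Hh; move: (H0 j'); rewrite Hj'.
have Hall : forall i, i \in idx -> viol (nth 0 Ys i) j.
  move=> i Hi; have := Hsame _ Hi; rewrite -/h Ej /g0.
  case: pickP => [ji Hji|H0]; last first.
    by have [j' Hj'] := Hviol _ Hi; move: (H0 j'); rewrite Hj'.
  by move=> /val_inj <-.
case: cert Hcert {Hmono} => [[nv Sv] ms] /= Hcert.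
apply: (@badcertP R (A j (inord 0)) (A j (inord 1)) (A j (inord 2)) (b j 0) _ _ _ _ _ Hcert).
  move=> s Hs; have := Hval (pt s) _ j; rewrite rowfa ptK; apply.
  by rewrite /seqset map_f.
move=> v /mapP [i Hi ->]; have := Hall i Hi; rewrite /viol rowfa ptK; apply.
Qed.

Lemma rc_all (R : realType) (S : seq tri) (L : seq (tri * int)) t v0 T Ys badl :
  size L = 4%N ->
  (forall x, x \in map pt S -> all (fun q => dott q.1 (tr x) <= q.2) L) ->
  (forall y, all (fun q => dott q.1 (tr y) <= q.2) L -> y \in map pt S) ->
  (0 < t)%N -> lowcert S Ys t v0 T badl ->
  @rcl_is R (seqset (map pt S)) 4 /\ @rc_is R (seqset (map pt S)) 4.
Proof.
move=> HL H1 H2 Ht Hlow.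
have U : forall Y, @separates R (seqset (map pt S)) Y 4.
  by move=> Y; rewrite -HL; apply: upper.
have LB := @lower R _ _ _ _ _ _ Hlow.
split; last first.
  split; first exact: U.
  move=> m Hm [A [b [Ha Hb]]]; apply: (LB m Hm); exists A, b; split => //.
  by move=> y _; apply: Hb.
split.
  exists t; split; first done.
  split; first exact: U.
  exact: LB.
move=> t' _.
pose P := fun m => `[< @separates R (seqset (map pt S)) (box t') m >].
have ex : exists m, P m by exists 4%N; apply/asboolP; exact: U.
case: (ex_minnP ex) => m /asboolP Hm Hmin.
exists m; split; first by apply: Hmin; apply/asboolP; exact: U.
split => // n Hn Hs.
by have := Hmin n (introT (asboolP _) Hs); rewrite leqNgt Hn.
Qed.

Definition Ys0 : seq tri := [:: mk (-2) 1 1; mk (-2) 1 2; mk (-2) 2 1; mk (-1) 0 (-2); mk (-1) 0 0; mk (-1) 0 1; mk (-1) 0 2; mk (-1) 1 0; mk (-1) 2 (-1); mk (-1) 2 0; mk (-1) 2 1; mk (-1) 2 2; mk 0 (-1) (-2); mk 0 (-1) 0; mk 0 (-1) 1; mk 0 (-1) 2; mk 0 0 (-2); mk 0 0 2; mk 0 1 (-2); mk 0 1 2; mk 0 2 (-2); mk 0 2 (-1); mk 0 2 0; mk 0 2 1; mk 1 (-2) (-2); mk 1 (-2) 0; mk 1 (-2) 1; mk 1 (-2) 2; mk 1 (-1) 2; mk 1 0 (-1); mk 1 0 1; mk 1 1 (-2); mk 1 1 (-1); mk 1 1 0; mk 1 1 1; mk 1 1 2; mk 2 (-2) 0; mk 2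 (-2) 1; mk 2 (-1) (-1); mk 2 (-1) 0; mk 2 0 (-1); mk 2 0 0].
Definition badl0 : seq (seq nat * (seq nat * seq tri * seq nat)) := [:: ([:: 3; 35], ([:: 3; 4], [:: mk 1 0 0; mk 0 1 0; mk 0 0 1], [:: 1; 4; 2]));
  ([:: 29; 30], ([:: 1; 1], [:: mk 1 0 0], [:: 2]));
  ([:: 5; 30], ([:: 1; 1], [:: mk 0 0 1], [:: 2]));
  ([:: 5; 29], ([:: 1; 1], [:: mk 0 0 0], [:: 2]));
  ([:: 1; 32], ([:: 1; 2], [:: mk 0 1 0], [:: 3]));
  ([:: 1; 29], ([:: 1; 2], [:: mk 0 0 0; mk 0 1 0], [:: 2; 1]));
  ([:: 11; 38], ([:: 1; 2], [:: mk 1 0 0], [:: 3]));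
  ([:: 0; 30; 32], ([:: 1; 1; 2], [:: mk 1 0 0; mk 0 1 0], [:: 1; 3]));
  ([:: 0; 38], ([:: 1; 1], [:: mk 0 0 0], [:: 2]));
  ([:: 6; 32], ([:: 1; 2], [:: mk 1 0 0; mk 0 1 0], [:: 1; 2]));
  ([:: 6; 29], ([:: 1; 2], [:: mk 0 0 0; mk 1 0 0], [:: 2; 1]));
  ([:: 2; 30; 31], ([:: 1; 1; 1], [:: mk 0 1 0], [:: 3]));
  ([:: 2; 38], ([:: 1; 1], [:: mk 0 0 0; mk 0 1 0], [:: 1; 1]));
  ([:: 11; 31; 36], ([:: 1; 1; 1], [:: mk 1 0 0; mk 0 1 0], [:: 2; 1]));
  ([:: 11; 31; 37], ([:: 1; 2; 2], [:: mk 1 0 0], [:: 5]));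
  ([:: 7; 30], ([:: 1; 1], [:: mk 0 1 0; mk 0 0 1], [:: 1; 1]));
  ([:: 7; 36], ([:: 2; 1], [:: mk 0 0 0], [:: 3]));
  ([:: 28; 31], ([:: 1; 1], [:: mk 1 0 0], [:: 2]));
  ([:: 18; 30], ([:: 1; 2], [:: mk 1 0 0; mk 0 1 0], [:: 2; 1]));
  ([:: 18; 28], ([:: 1; 1], [:: mk 0 0 0; mk 1 0 0], [:: 1; 1]));
  ([:: 17; 31], ([:: 1; 1], [:: mk 1 0 0; mk 0 1 0], [:: 1; 1]));
  ([:: 17; 29], ([:: 1; 1], [:: mk 1 0 0; mk 0 0 1], [:: 1; 1]));
  ([:: 17; 18], ([:: 2; 1], [:: mk 0 1 0; mk 0 0 1], [:: 1; 2]));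
  ([:: 7; 28], ([:: 1; 1], [:: mk 0 0 1], [:: 2]));
  ([:: 2; 37], ([:: 1; 1], [:: mk 0 0 1], [:: 2]));
  ([:: 2; 36], ([:: 1; 1], [:: mk 0 0 0; mk 0 0 1], [:: 1; 1]));
  ([:: 15; 32], ([:: 1; 2], [:: mk 1 0 0; mk 0 1 0], [:: 2; 1]));
  ([:: 15; 31], ([:: 1; 1], [:: mk 0 0 0; mk 1 0 0], [:: 1; 1]));
  ([:: 11; 26; 32], ([:: 1; 2; 4], [:: mk 1 0 0; mk 0 1 0], [:: 5; 2]));
  ([:: 7; 26; 29], ([:: 2; 1; 1], [:: mk 0 0 0], [:: 4]));
  ([:: 11; 32; 36], ([:: 1; 2; 2], [:: mk 1 0 0], [:: 5]));
  ([:: 20; 28], ([:: 1; 1], [:: mk 1 0 0; mk 0 1 0], [:: 1; 1]));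
  ([:: 27; 32], ([:: 1; 2], [:: mk 1 0 0], [:: 3]));
  ([:: 20; 27], ([:: 1; 1], [:: mk 0 0 0; mk 1 0 0], [:: 1; 1]));
  ([:: 8; 28], ([:: 1; 1], [:: mk 0 1 0; mk 0 0 1], [:: 1; 1]));
  ([:: 8; 26], ([:: 1; 1], [:: mk 0 0 0], [:: 2]));
  ([:: 8; 27], ([:: 1; 1], [:: mk 0 0 0; mk 0 0 1], [:: 1; 1]));
  ([:: 15; 20], ([:: 1; 1], [:: mk 0 0 0; mk 0 1 0], [:: 1; 1]));
  ([:: 8; 30], ([:: 1; 1], [:: mk 0 1 0], [:: 2]));
  ([:: 14; 32], ([:: 1; 1], [:: mk 0 0 0; mk 1 0 0], [:: 1; 1]));
  ([:: 8; 14; 29], ([:: 1; 2; 1], [:: mk 0 0 0], [:: 4]));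
  ([:: 10; 36], ([:: 1; 1], [:: mk 1 0 0; mk 0 0 1], [:: 1; 1]));
  ([:: 9; 37], ([:: 2; 1], [:: mk 0 1 0; mk 0 0 1], [:: 2; 1]));
  ([:: 9; 36], ([:: 2; 1], [:: mk 0 0 0; mk 0 1 0], [:: 1; 2]));
  ([:: 9; 26], ([:: 1; 1], [:: mk 0 0 0; mk 0 0 1], [:: 1; 1]));
  ([:: 8; 37], ([:: 1; 1], [:: mk 0 0 0; mk 1 0 0], [:: 1; 1]));
  ([:: 7; 37], ([:: 2; 1], [:: mk 0 0 0; mk 0 0 1], [:: 2; 1]));
  ([:: 3; 23; 36], ([:: 4; 9; 2], [:: mk 0 1 0; mk 0 0 1], [:: 14; 1]));
  ([:: 14; 23], ([:: 2; 1], [:: mk 0 0 1], [:: 3]));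
  ([:: 2; 39], ([:: 1; 1], [:: mk 0 1 0; mk 0 0 1], [:: 1; 1]));
  ([:: 7; 39], ([:: 2; 1], [:: mk 0 0 0; mk 0 1 0], [:: 2; 1]));
  ([:: 0; 39], ([:: 1; 1], [:: mk 0 0 0; mk 0 0 1], [:: 1; 1]));
  ([:: 18; 19], ([:: 1; 1], [:: mk 0 1 0], [:: 2]));
  ([:: 0; 19; 36], ([:: 1; 1; 1], [:: mk 0 0 1], [:: 3]));
  ([:: 7; 41], ([:: 1; 1], [:: mk 1 0 0; mk 0 1 0], [:: 1; 1]));
  ([:: 0; 41], ([:: 1; 1], [:: mk 0 1 0; mk 0 0 1], [:: 1; 1]));
  ([:: 7; 23; 29], ([:: 1; 1; 1], [:: mk 0 1 0], [:: 3]));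
  ([:: 10; 29], ([:: 1; 1], [:: mk 0 1 0], [:: 2]));
  ([:: 10; 26], ([:: 1; 1], [:: mk 0 0 1], [:: 2]));
  ([:: 15; 18], ([:: 1; 1], [:: mk 0 0 0], [:: 2]));
  ([:: 6; 31], ([:: 1; 1], [:: mk 0 0 0; mk 0 1 0], [:: 1; 1]));
  ([:: 1; 38], ([:: 1; 1], [:: mk 0 0 0; mk 0 0 1], [:: 1; 1]));
  ([:: 14; 33], ([:: 1; 1], [:: mk 1 0 0; mk 0 0 1], [:: 1; 1]));
  ([:: 11; 27; 31], ([:: 1; 1; 2], [:: mk 1 0 0; mk 0 1 0], [:: 2; 2]));
  ([:: 3; 28; 32], ([:: 1; 4; 6], [:: mk 1 0 0; mk 0 1 0], [:: 9; 2]));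
  ([:: 11; 26; 31], ([:: 3; 2; 4], [:: mk 1 0 0; mk 0 1 0], [:: 3; 6]));
  ([:: 1; 30; 31], ([:: 1; 2; 2], [:: mk 1 0 0; mk 0 1 0], [:: 2; 3]));
  ([:: 10; 38], ([:: 1; 1], [:: mk 1 0 0; mk 0 1 0], [:: 1; 1]));
  ([:: 5; 41], ([:: 1; 1], [:: mk 1 0 0; mk 0 0 1], [:: 1; 1]));
  ([:: 11; 25], ([:: 1; 1], [:: mk 0 0 1], [:: 2]));
  ([:: 22; 26], ([:: 1; 1], [:: mk 1 0 0; mk 0 0 1], [:: 1; 1]));
  ([:: 22; 25], ([:: 2; 1], [:: mk 1 0 0; mk 0 1 0], [:: 1; 2]));
  ([:: 14; 22], ([:: 1; 1], [:: mk 0 1 0; mk 0 0 1], [:: 1; 1]));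
  ([:: 10; 25], ([:: 1; 1], [:: mk 0 0 0; mk 0 0 1], [:: 1; 1]));
  ([:: 5; 10; 37], ([:: 1; 1; 1], [:: mk 0 0 1], [:: 3]));
  ([:: 0; 25; 32], ([:: 1; 1; 1], [:: mk 0 0 0], [:: 3]));
  ([:: 1; 40], ([:: 1; 2], [:: mk 1 0 0; mk 0 1 0], [:: 2; 1]));
  ([:: 0; 40], ([:: 1; 1], [:: mk 0 0 0; mk 0 1 0], [:: 1; 1]));
  ([:: 5; 40], ([:: 1; 1], [:: mk 0 0 0; mk 1 0 0], [:: 1; 1]));
  ([:: 19; 29], ([:: 1; 2], [:: mk 1 0 0; mk 0 1 0], [:: 2; 1]));
  ([:: 5; 19; 38], ([:: 4; 3; 2], [:: mk 0 1 0; mk 0 0 1], [:: 1; 8]));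
  ([:: 0; 11; 36], ([:: 3; 4; 5], [:: mk 0 1 0; mk 0 0 1], [:: 1; 11]));
  ([:: 0; 23; 37], ([:: 2; 1; 2], [:: mk 0 0 1], [:: 5]));
  ([:: 0; 27; 33], ([:: 1; 1; 1], [:: mk 0 0 1], [:: 3]));
  ([:: 22; 36], ([:: 1; 1], [:: mk 1 0 0], [:: 2]));
  ([:: 21; 27], ([:: 2; 1], [:: mk 1 0 0; mk 0 1 0], [:: 1; 2]));
  ([:: 21; 26], ([:: 1; 1], [:: mk 0 0 0; mk 1 0 0], [:: 1; 1]));
  ([:: 14; 21], ([:: 1; 1], [:: mk 0 0 0; mk 0 1 0], [:: 1; 1]));
  ([:: 7; 19; 26], ([:: 1; 1; 1], [:: mk 0 0 1], [:: 3]));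
  ([:: 5; 7; 38], ([:: 1; 1; 1], [:: mk 0 0 0], [:: 3]));
  ([:: 14; 20], ([:: 2; 1], [:: mk 0 0 0], [:: 3]));
  ([:: 0; 23; 29], ([:: 1; 2; 3], [:: mk 1 0 0; mk 0 1 0], [:: 1; 5]));
  ([:: 11; 24], ([:: 1; 1], [:: mk 0 0 0], [:: 2]));
  ([:: 23; 24], ([:: 2; 1], [:: mk 1 0 0; mk 0 1 0], [:: 1; 2]));
  ([:: 23; 25], ([:: 1; 1], [:: mk 1 0 0; mk 0 0 1], [:: 1; 1]));
  ([:: 3; 23; 37], ([:: 2; 4; 1], [:: mk 0 1 0; mk 0 0 1], [:: 6; 1]));
  ([:: 5; 14; 31], ([:: 1; 1; 1], [:: mk 0 0 0], [:: 3]));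
  ([:: 5; 32], ([:: 1; 1], [:: mk 0 0 0; mk 0 1 0], [:: 1; 1]));
  ([:: 11; 29], ([:: 1; 2], [:: mk 1 0 0; mk 0 1 0], [:: 1; 2]));
  ([:: 24; 34], ([:: 1; 2], [:: mk 1 0 0], [:: 3]));
  ([:: 25; 33], ([:: 1; 2], [:: mk 1 0 0], [:: 3]));
  ([:: 0; 30; 36], ([:: 3; 4; 1], [:: mk 0 1 0; mk 0 0 1], [:: 1; 7]));
  ([:: 0; 14; 29], ([:: 1; 1; 2], [:: mk 0 0 0], [:: 4]));
  ([:: 26; 30; 32], ([:: 1; 1; 2], [:: mk 1 0 0], [:: 4]));
  ([:: 7; 14; 29], ([:: 1; 1; 1], [:: mk 0 0 0], [:: 3]));
  ([:: 20; 30; 36], ([:: 1; 2; 1], [:: mk 1 0 0], [:: 4]));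
  ([:: 17; 32; 36], ([:: 1; 2; 1], [:: mk 1 0 0], [:: 4]));
  ([:: 17; 20], ([:: 1; 1], [:: mk 0 1 0], [:: 2]));
  ([:: 5; 22; 27], ([:: 1; 1; 1], [:: mk 0 0 1], [:: 3]));
  ([:: 0; 30; 37], ([:: 2; 2; 1], [:: mk 0 0 1], [:: 5]));
  ([:: 0; 29; 36], ([:: 2; 2; 1], [:: mk 0 0 0], [:: 5]));
  ([:: 16; 30], ([:: 1; 3], [:: mk 1 0 0; mk 0 0 1], [:: 3; 1]));
  ([:: 9; 25], ([:: 1; 1], [:: mk 0 0 0], [:: 2]));
  ([:: 11; 16; 27], ([:: 3; 2; 3], [:: mk 0 0 1], [:: 8]));
  ([:: 16; 19], ([:: 2; 3], [:: mk 0 1 0; mk 0 0 1], [:: 3; 2]));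
  ([:: 11; 16; 26], ([:: 3; 1; 3], [:: mk 0 0 1], [:: 7]));
  ([:: 11; 18; 26], ([:: 2; 1; 2], [:: mk 0 1 0; mk 0 0 1], [:: 1; 4]));
  ([:: 0; 14; 31], ([:: 1; 3; 2], [:: mk 0 0 0], [:: 6]));
  ([:: 12; 34], ([:: 1; 2], [:: mk 1 0 0; mk 0 1 0], [:: 2; 1]));
  ([:: 13; 33], ([:: 1; 2], [:: mk 1 0 0; mk 0 1 0], [:: 2; 1]));
  ([:: 13; 23], ([:: 1; 1], [:: mk 0 1 0; mk 0 0 1], [:: 1; 1]));
  ([:: 12; 23], ([:: 1; 2], [:: mk 0 1 0], [:: 3]));
  ([:: 7; 23; 27], ([:: 2; 1; 2], [:: mk 0 0 1], [:: 5]));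
  ([:: 0; 23; 26], ([:: 2; 3; 4], [:: mk 0 0 1], [:: 9]));
  ([:: 5; 11; 36], ([:: 1; 1; 1], [:: mk 0 0 1], [:: 3]));
  ([:: 7; 33], ([:: 1; 1], [:: mk 0 1 0], [:: 2]));
  ([:: 0; 3; 33], ([:: 2; 1; 6], [:: mk 1 0 0; mk 0 1 0], [:: 1; 8]));
  ([:: 4; 30], ([:: 1; 2], [:: mk 1 0 0; mk 0 0 1], [:: 1; 2]));
  ([:: 4; 33], ([:: 1; 2], [:: mk 1 0 0; mk 0 1 0], [:: 1; 2]));
  ([:: 13; 34], ([:: 1; 1], [:: mk 1 0 0; mk 0 0 1], [:: 1; 1]));
  ([:: 2; 29; 33], ([:: 1; 1; 1], [:: mk 0 1 0], [:: 3]));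
  ([:: 19; 26; 32], ([:: 1; 2; 4], [:: mk 1 0 0; mk 0 1 0], [:: 6; 1]));
  ([:: 19; 24], ([:: 2; 1], [:: mk 1 0 0; mk 0 0 1], [:: 1; 2]));
  ([:: 3; 26; 33], ([:: 1; 2; 6], [:: mk 1 0 0; mk 0 1 0], [:: 7; 2]));
  ([:: 0; 27; 31], ([:: 4; 3; 5], [:: mk 0 0 0; mk 0 1 0], [:: 9; 3]));
  ([:: 11; 13; 31], ([:: 2; 1; 2], [:: mk 0 1 0], [:: 5]));
  ([:: 0; 26; 31], ([:: 1; 1; 1], [:: mk 0 0 0], [:: 3]));
  ([:: 13; 19], ([:: 1; 1], [:: mk 0 0 1], [:: 2]));
  ([:: 3; 28; 33], ([:: 1; 1; 3], [:: mk 1 0 0; mk 0 1 0], [:: 3; 2]));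
  ([:: 3; 33; 37], ([:: 1; 4; 2], [:: mk 1 0 0], [:: 7]));
  ([:: 5; 33], ([:: 1; 1], [:: mk 0 1 0; mk 0 0 1], [:: 1; 1]));
  ([:: 8; 23; 36], ([:: 1; 1; 1], [:: mk 1 0 0; mk 0 1 0], [:: 1; 2]));
  ([:: 3; 19; 26], ([:: 2; 5; 2], [:: mk 0 1 0; mk 0 0 1], [:: 1; 8]));
  ([:: 1; 19; 31], ([:: 1; 1; 2], [:: mk 0 1 0], [:: 4]));
  ([:: 28; 29; 32], ([:: 1; 1; 1], [:: mk 1 0 0], [:: 3]));
  ([:: 3; 10; 28], ([:: 2; 3; 5], [:: mk 0 1 0; mk 0 0 1], [:: 1; 9]));
  ([:: 3; 10; 37], ([:: 2; 8; 5], [:: mk 0 1 0; mk 0 0 1], [:: 6; 9]));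
  ([:: 23; 29; 37], ([:: 1; 2; 1], [:: mk 1 0 0], [:: 4]));
  ([:: 23; 29; 36], ([:: 1; 1; 1], [:: mk 1 0 0], [:: 3]));
  ([:: 3; 22; 27], ([:: 1; 4; 1], [:: mk 0 1 0], [:: 6]));
  ([:: 3; 11; 36], ([:: 1; 3; 2], [:: mk 0 1 0; mk 0 0 1], [:: 2; 4]));
  ([:: 3; 19; 27], ([:: 1; 2; 1], [:: mk 0 0 1], [:: 4]));
  ([:: 24; 28; 32], ([:: 1; 4; 6], [:: mk 1 0 0], [:: 11]));
  ([:: 3; 23; 27], ([:: 1; 2; 1], [:: mk 0 1 0; mk 0 0 1], [:: 2; 2]));
  ([:: 0; 26; 30], ([:: 2; 1; 3], [:: mk 0 0 1], [:: 6]));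
  ([:: 0; 29; 33], ([:: 1; 1; 2], [:: mk 1 0 0; mk 0 1 0], [:: 1; 3]));
  ([:: 5; 26; 31], ([:: 3; 1; 2], [:: mk 0 0 0], [:: 6]));
  ([:: 26; 29; 33], ([:: 1; 1; 2], [:: mk 1 0 0], [:: 4]));
  ([:: 13; 22], ([:: 1; 2], [:: mk 0 1 0], [:: 3]));
  ([:: 28; 29; 33], ([:: 1; 2; 1], [:: mk 1 0 0], [:: 4]));
  ([:: 3; 30], ([:: 1; 4], [:: mk 1 0 0; mk 0 0 1], [:: 3; 2]));
  ([:: 16; 35], ([:: 1; 1], [:: mk 1 0 0; mk 0 1 0], [:: 1; 1]));
  ([:: 4; 34], ([:: 1; 1], [:: mk 0 1 0; mk 0 0 1], [:: 1; 1]));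
  ([:: 8; 34; 36], ([:: 1; 1; 1], [:: mk 1 0 0; mk 0 1 0], [:: 2; 1]));
  ([:: 7; 29; 34], ([:: 1; 1; 1], [:: mk 1 0 0; mk 0 1 0], [:: 1; 2]));
  ([:: 28; 29; 34], ([:: 1; 3; 1], [:: mk 1 0 0], [:: 5]));
  ([:: 14; 29; 34], ([:: 1; 3; 2], [:: mk 1 0 0; mk 0 1 0], [:: 5; 1]));
  ([:: 25; 29; 34], ([:: 1; 2; 2], [:: mk 1 0 0], [:: 5]));
  ([:: 26; 29; 34], ([:: 1; 3; 2], [:: mk 1 0 0], [:: 6]));
  ([:: 5; 18; 34], ([:: 2; 3; 4], [:: mk 1 0 0; mk 0 1 0], [:: 2; 7]));
  ([:: 5; 14; 34], ([:: 1; 1; 1], [:: mk 0 0 1], [:: 3]));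
  ([:: 5; 26; 34], ([:: 3; 1; 2], [:: mk 0 0 1], [:: 6]));
  ([:: 7; 27; 34], ([:: 2; 1; 1], [:: mk 0 1 0; mk 0 0 1], [:: 1; 3]));
  ([:: 5; 20; 34], ([:: 1; 1; 1], [:: mk 0 1 0], [:: 3]));
  ([:: 12; 30; 33], ([:: 1; 2; 2], [:: mk 1 0 0; mk 0 1 0], [:: 4; 1]));
  ([:: 24; 30; 33], ([:: 1; 2; 2], [:: mk 1 0 0], [:: 5]));
  ([:: 3; 34], ([:: 1; 2], [:: mk 1 0 0; mk 0 1 0], [:: 1; 2]));
  ([:: 12; 35], ([:: 3; 4], [:: mk 1 0 0; mk 0 1 0; mk 0 0 1], [:: 4; 1; 2]));
  ([:: 12; 19], ([:: 1; 2], [:: mk 0 1 0; mk 0 0 1], [:: 1; 2]));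
  ([:: 7; 29; 35], ([:: 1; 2; 1], [:: mk 1 0 0; mk 0 1 0], [:: 2; 2]));
  ([:: 24; 29; 35], ([:: 1; 2; 2], [:: mk 1 0 0], [:: 5]));
  ([:: 28; 29; 35], ([:: 1; 4; 1], [:: mk 1 0 0], [:: 6]));
  ([:: 25; 29; 35], ([:: 1; 4; 2], [:: mk 1 0 0], [:: 7]));
  ([:: 26; 29; 35], ([:: 1; 5; 2], [:: mk 1 0 0], [:: 8]));
  ([:: 8; 35; 36], ([:: 2; 1; 1], [:: mk 1 0 0; mk 0 1 0], [:: 1; 3]));
  ([:: 5; 24; 35], ([:: 7; 2; 5], [:: mk 0 1 0; mk 0 0 1], [:: 1; 13]));
  ([:: 5; 18; 35], ([:: 2; 5; 4], [:: mk 1 0 0; mk 0 1 0], [:: 2; 9]));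
  ([:: 5; 13; 35], ([:: 1; 1; 1], [:: mk 0 0 1], [:: 3]));
  ([:: 5; 31; 35], ([:: 4; 5; 3], [:: mk 1 0 0; mk 0 1 0], [:: 4; 8]));
  ([:: 5; 23; 26], ([:: 1; 1; 1], [:: mk 0 0 1], [:: 3]));
  ([:: 7; 14; 35], ([:: 1; 2; 1], [:: mk 0 0 1], [:: 4]));
  ([:: 7; 26; 35], ([:: 2; 1; 1], [:: mk 0 1 0; mk 0 0 1], [:: 1; 3]));
  ([:: 7; 27; 35], ([:: 3; 2; 1], [:: mk 0 0 1], [:: 6]));
  ([:: 0; 28; 32], ([:: 1; 1; 3], [:: mk 1 0 0; mk 0 1 0], [:: 2; 3]));
  ([:: 23; 26; 32], ([:: 1; 2; 3], [:: mk 1 0 0; mk 0 1 0], [:: 5; 1]));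
  ([:: 0; 23; 36], ([:: 1; 1; 1], [:: mk 0 1 0; mk 0 0 1], [:: 1; 2]));
  ([:: 5; 35; 38], ([:: 7; 3; 2], [:: mk 0 1 0; mk 0 0 1], [:: 1; 11]));
  ([:: 0; 25; 35], ([:: 1; 1; 1], [:: mk 0 0 1], [:: 3]));
  ([:: 0; 35; 36], ([:: 7; 4; 5], [:: mk 0 1 0; mk 0 0 1], [:: 1; 15]));
  ([:: 9; 14; 35], ([:: 1; 3; 1], [:: mk 0 0 1], [:: 5]));
  ([:: 5; 35; 39], ([:: 3; 1; 1], [:: mk 0 0 1], [:: 5]));
  ([:: 0; 30; 31], ([:: 1; 3; 2], [:: mk 1 0 0; mk 0 1 0], [:: 3; 3]));
  ([:: 7; 18; 27], ([:: 1; 1; 1], [:: mk 0 0 0], [:: 3]));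
  ([:: 23; 27; 31], ([:: 2; 3; 4], [:: mk 1 0 0; mk 0 1 0], [:: 7; 2]));
  ([:: 26; 30; 31], ([:: 1; 3; 2], [:: mk 1 0 0], [:: 6]))].
Definition Tc0 : ctree := (Node 3 (Leaf 0) (Node 34 (Node 30 (Node 29 (Leaf 1) (Node 5 (Leaf 2) (Leaf 3) (Node 33 (Node 11 (Node 32 (Node 1 (Leaf 4) (Leaf 5) (Node 38 (Leaf 6) (Node 0 (Leaf 7) (Leaf 8) (Node 6 (Leaf 9) (Leaf 10) (Node 31 (Node 2 (Leaf 11) (Leaf 12) (Node 36 (Leaf 13) (Node 37 (Leaf 14) (Node 7 (Leaf 15) (Leaf 16) (Node 28 (Leaf 17) (Node 18 (Leaf 18) (Leaf 19) (Node 17 (Leaf 20) (Leaf 21) (Leaf 22))) (Leaf 23))) (Leaf 24)) (Leaf 25))) (Node 15 (Leaf 26) (Leaf 27) (Node 18 (Leaf 18) (Node 26 (Leaf 28) (Node 7 (Leaf 15) (Leaf 29) (Node 36 (Leaf 30) (Node 28 (Node 20 (Leaf 31) (Node 27 (Leaf 32) (Leaf 33) (Node 8 (Leaf 34) (Leaf 35) (Leaf 36))) (Leaf 37)) (Leaf 19) (Leaf 23)) (Leaf 16))) (Node 10 (Node 8 (Leaf 38) (Node 27 (Leaf 32) (Leaf 36) (Node 14 (Leaf 39) (Leaf 40) (Node 36 (Leaf 41) (Node 23 (Node 7 (Leaf 15) (Leaf 16) (Node 37 (Node 9 (Leaf 42) (Leaf 43) (Leaf 44)) (Leaf 45) (Leaf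 46))) (Leaf 47) (Leaf 48)) (Node 7 (Leaf 15) (Node 23 (Node 41 (Node 19 (Node 39 (Node 2 (Leaf 49) (Leaf 12) (Leaf 25)) (Leaf 50) (Leaf 51)) (Leaf 52) (Leaf 53)) (Leaf 54) (Leaf 55)) (Leaf 56) (Leaf 48)) (Leaf 16))))) (Leaf 35)) (Leaf 57) (Leaf 58))) (Leaf 59))) (Leaf 60)))) (Leaf 61))) (Node 14 (Leaf 62) (Leaf 39) (Node 31 (Node 27 (Leaf 63) (Leaf 32) (Node 28 (Leaf 17) (Leaf 64) (Node 7 (Leaf 15) (Node 26 (Leaf 65) (Leaf 29) (Node 36 (Leaf 13) (Leaf 16) (Node 23 (Node 37 (Leaf 14) (Leaf 46) (Node 10 (Node 18 (Leaf 18) (Node 41 (Node 1 (Leaf 66) (Leaf 5) (Node 38 (Leaf 67) (Node 2 (Leaf 11) (Leaf 12) (Leaf 25)) (Leaf 61))) (Leaf 54) (Leaf 68)) (Leaf 19)) (Leaf 57) (Leaf 58))) (Leaf 56) (Leaf 48)))) (Leaf 23)))) (Node 23 (Node 7 (Leaf 15) (Node 41 (Node 26 (Node 10 (Leaf 58) (Leaf 57) (Node 36 (Node 37 (Node 25 (Leaf 69) (Node 22 (Leaf 70) (Leaf 71) (Leaf 72)) (Leaf 73)) (Leaf 46) (Leaf 74)) (Leaf 16) (Leaf 41))) (Leaf 29) (Node 10 (Node 36 (Leaf 41) (Leaf 16) (Node 8 (Leaf 38) (Node 0 (Leaf 55) (Node 25 (Leaf 73) (Leaf 75) (Node 38 (Leaf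 67) (Leaf 8) (Node 19 (Node 1 (Node 40 (Leaf 76) (Leaf 77) (Leaf 78)) (Leaf 5) (Leaf 61)) (Leaf 79) (Leaf 80)))) (Node 19 (Node 38 (Leaf 67) (Node 39 (Node 2 (Leaf 49) (Leaf 12) (Leaf 25)) (Leaf 50) (Leaf 51)) (Leaf 8)) (Leaf 79) (Leaf 53))) (Leaf 35))) (Leaf 57) (Leaf 58))) (Leaf 54) (Leaf 68)) (Node 28 (Node 20 (Leaf 31) (Node 38 (Leaf 6) (Node 0 (Node 36 (Leaf 81) (Node 37 (Leaf 82) (Node 27 (Leaf 83) (Leaf 33) (Node 8 (Leaf 34) (Leaf 45) (Leaf 36))) (Leaf 46)) (Leaf 16)) (Leaf 8) (Node 36 (Node 10 (Leaf 41) (Leaf 57) (Node 25 (Leaf 69) (Node 22 (Leaf 84) (Leaf 71) (Leaf 72)) (Leaf 73))) (Node 22 (Node 26 (Leaf 70) (Node 8 (Leaf 34) (Leaf 35) (Node 27 (Node 21 (Leaf 85) (Leaf 86) (Leaf 87)) (Leaf 33) (Leaf 36))) (Node 10 (Node 19 (Node 8 (Leaf 34) (Node 37 (Node 9 (Leaf 42) (Leaf 43) (Leaf 44)) (Leaf 45) (Leaf 46)) (Leaf 35)) (Leaf 79) (Leaf 88)) (Leaf 57) (Leaf 58))) (Leaf 84) (Leaf 72)) (Leaf 16))) (Leaf 89)) (Leaf 90)) (Leaf 17) (Leaf 23))) (Node 7 (Leaf 15) (Leaf 56) (Node 36 (Node 0 (Leaf 81) (Leaf 91) (Node 37 (Node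 24 (Leaf 92) (Leaf 93) (Node 28 (Node 10 (Leaf 41) (Leaf 57) (Node 25 (Leaf 69) (Leaf 94) (Leaf 73))) (Leaf 17) (Leaf 23))) (Leaf 95) (Leaf 46))) (Leaf 47) (Leaf 16))) (Leaf 48)) (Leaf 96))) (Leaf 97)) (Leaf 98) (Node 24 (Leaf 99) (Node 25 (Leaf 100) (Node 36 (Node 10 (Leaf 41) (Leaf 73) (Node 22 (Leaf 84) (Leaf 71) (Node 14 (Leaf 62) (Node 0 (Leaf 101) (Leaf 102) (Node 32 (Node 26 (Leaf 103) (Node 7 (Leaf 15) (Leaf 104) (Node 27 (Leaf 32) (Node 20 (Leaf 105) (Leaf 90) (Node 17 (Leaf 106) (Leaf 21) (Leaf 107))) (Leaf 108))) (Leaf 58)) (Leaf 39) (Leaf 97))) (Leaf 72)))) (Node 7 (Leaf 15) (Leaf 16) (Node 0 (Node 32 (Leaf 7) (Node 37 (Leaf 109) (Node 27 (Leaf 83) (Leaf 32) (Node 8 (Leaf 38) (Leaf 45) (Leaf 36))) (Leaf 46)) (Leaf 97)) (Leaf 110) (Node 23 (Node 32 (Node 1 (Leaf 4) (Leaf 5) (Node 6 (Leaf 9) (Leaf 10) (Node 31 (Node 28 (Leaf 17) (Node 18 (Leaf 18) (Leaf 19) (Node 17 (Leaf 20) (Leaf 21) (Leaf 22))) (Leaf 23)) (Node 28 (Node 15 (Leaf 26) (Leaf 27) (Node 18 (Leaf 19) (Node 20 (Leaf 31) (Node 27 (Leaf 32) (Leaf 33) (Node 14 (Leaf 48) (Leaf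 90) (Node 16 (Leaf 111) (Node 22 (Node 8 (Leaf 34) (Node 26 (Leaf 70) (Leaf 35) (Node 37 (Node 9 (Leaf 42) (Leaf 112) (Leaf 44)) (Leaf 45) (Leaf 46))) (Leaf 36)) (Leaf 71) (Leaf 72)) (Leaf 113)))) (Leaf 37)) (Leaf 59))) (Leaf 17) (Leaf 23)) (Leaf 60)))) (Node 28 (Node 14 (Leaf 48) (Leaf 39) (Node 31 (Leaf 17) (Node 20 (Leaf 31) (Node 22 (Node 26 (Leaf 70) (Node 8 (Leaf 34) (Leaf 35) (Node 27 (Node 21 (Leaf 85) (Leaf 86) (Leaf 87)) (Leaf 33) (Leaf 36))) (Node 10 (Node 18 (Leaf 19) (Node 16 (Leaf 111) (Node 19 (Node 38 (Leaf 67) (Node 8 (Leaf 34) (Node 37 (Node 9 (Leaf 42) (Leaf 112) (Leaf 44)) (Leaf 45) (Leaf 46)) (Leaf 35)) (Leaf 8)) (Leaf 114) (Leaf 88)) (Leaf 115)) (Leaf 116)) (Leaf 73) (Leaf 58))) (Leaf 71) (Leaf 72)) (Leaf 90)) (Leaf 117))) (Leaf 64) (Leaf 23)) (Leaf 97)) (Leaf 93) (Node 14 (Leaf 62) (Node 32 (Node 26 (Leaf 103) (Node 27 (Leaf 32) (Node 12 (Leaf 118) (Node 1 (Leaf 4) (Leaf 5) (Node 13 (Leaf 119) (Node 6 (Leaf 9) (Leaf 10) (Node 8 (Leaf 38) (Leaf 35) (Node 31 (Node 28 (Leaf 17) (Node 18 (Leaf 18) (Leaf 19) (Node 17 (Leaf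 20) (Leaf 21) (Leaf 22))) (Leaf 23)) (Node 28 (Node 20 (Leaf 31) (Leaf 90) (Node 15 (Leaf 26) (Leaf 27) (Leaf 37))) (Leaf 17) (Leaf 23)) (Leaf 60)))) (Leaf 120))) (Leaf 121)) (Leaf 122)) (Leaf 123)) (Leaf 39) (Leaf 97)) (Leaf 48))))) (Leaf 124)) (Leaf 69)) (Leaf 92))) (Node 7 (Leaf 15) (Leaf 125) (Node 37 (Node 0 (Leaf 109) (Leaf 126) (Node 28 (Node 4 (Leaf 127) (Leaf 128) (Node 13 (Leaf 129) (Leaf 119) (Node 19 (Node 2 (Leaf 24) (Leaf 130) (Node 31 (Leaf 17) (Node 26 (Node 32 (Leaf 131) (Node 10 (Leaf 58) (Leaf 57) (Node 25 (Node 23 (Leaf 94) (Node 36 (Node 11 (Leaf 69) (Leaf 98) (Node 24 (Leaf 132) (Leaf 93) (Leaf 92))) (Leaf 47) (Leaf 25)) (Leaf 120)) (Leaf 100) (Leaf 73))) (Leaf 97)) (Leaf 133) (Node 10 (Node 36 (Leaf 41) (Node 9 (Leaf 42) (Leaf 43) (Leaf 44)) (Leaf 25)) (Leaf 57) (Leaf 58))) (Node 26 (Node 11 (Node 32 (Leaf 28) (Node 27 (Node 10 (Leaf 58) (Leaf 57) (Node 25 (Leaf 69) (Leaf 100) (Leaf 73))) (Leaf 32) (Leaf 134)) (Leaf 97)) (Leaf 98) (Leaf 135)) (Leaf 133) (Leaf 136)))) (Leaf 79) (Leaf 137)))) (Leaf 138) (Leaf 23))) (Leaf 139) (Leaf 46)))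 (Leaf 140))) (Node 5 (Leaf 2) (Node 33 (Node 11 (Node 32 (Node 1 (Leaf 4) (Node 38 (Leaf 6) (Leaf 61) (Node 0 (Leaf 7) (Node 6 (Leaf 9) (Node 31 (Node 2 (Leaf 11) (Node 36 (Leaf 13) (Leaf 25) (Node 37 (Leaf 14) (Leaf 24) (Node 7 (Leaf 15) (Node 28 (Leaf 17) (Leaf 23) (Node 18 (Leaf 18) (Node 17 (Leaf 20) (Leaf 22) (Leaf 21)) (Leaf 19))) (Leaf 16)))) (Leaf 12)) (Leaf 60) (Node 15 (Leaf 26) (Node 18 (Leaf 18) (Leaf 59) (Node 26 (Leaf 28) (Node 10 (Node 19 (Node 8 (Leaf 38) (Leaf 35) (Node 27 (Leaf 32) (Node 14 (Leaf 39) (Node 36 (Leaf 41) (Node 7 (Leaf 15) (Leaf 16) (Node 23 (Node 41 (Node 39 (Node 2 (Leaf 49) (Leaf 25) (Leaf 12)) (Leaf 51) (Leaf 50)) (Leaf 55) (Leaf 54)) (Leaf 48) (Leaf 56))) (Node 23 (Node 7 (Leaf 15) (Node 37 (Node 9 (Leaf 42) (Leaf 44) (Leaf 43)) (Leaf 46) (Leaf 45)) (Leaf 16)) (Leaf 48) (Leaf 141))) (Leaf 40)) (Leaf 36))) (Leaf 142) (Leaf 52)) (Leaf 58) (Leaf 57)) (Node 7 (Leaf 15) (Node 36 (Leaf 30) (Leaf 16) (Node 28 (Node 20 (Leaf 31) (Leaf 37) (Node 27 (Leaf 32) (Node 8 (Leaf 34) (Leaf 36) (Leaf 35)) (Leaf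 33))) (Leaf 23) (Leaf 19))) (Leaf 29)))) (Leaf 27))) (Leaf 10)) (Leaf 8))) (Leaf 5)) (Leaf 97) (Node 14 (Leaf 62) (Node 31 (Node 27 (Leaf 63) (Node 28 (Leaf 17) (Node 7 (Leaf 15) (Leaf 23) (Node 26 (Leaf 65) (Node 36 (Leaf 13) (Node 23 (Node 37 (Leaf 14) (Node 10 (Node 18 (Leaf 18) (Leaf 19) (Node 41 (Node 19 (Node 1 (Leaf 143) (Node 38 (Leaf 67) (Leaf 61) (Node 2 (Leaf 11) (Leaf 25) (Leaf 12))) (Leaf 5)) (Leaf 142) (Leaf 52)) (Leaf 68) (Leaf 54))) (Leaf 58) (Leaf 57)) (Leaf 46)) (Leaf 48) (Leaf 56)) (Leaf 16)) (Leaf 29))) (Leaf 144)) (Leaf 32)) (Leaf 96) (Node 23 (Node 7 (Leaf 15) (Node 28 (Node 20 (Leaf 31) (Leaf 90) (Node 38 (Leaf 6) (Leaf 89) (Node 0 (Node 36 (Leaf 81) (Leaf 16) (Node 37 (Leaf 82) (Leaf 46) (Node 27 (Leaf 83) (Node 8 (Leaf 34) (Leaf 36) (Leaf 45)) (Leaf 33)))) (Node 36 (Node 10 (Leaf 41) (Node 25 (Leaf 69) (Leaf 73) (Node 22 (Leaf 84) (Leaf 72) (Leaf 71))) (Leaf 57)) (Leaf 16) (Node 22 (Node 26 (Leaf 70) (Node 10 (Node 19 (Node 8 (Leaf 34) (Leaf 35) (Node 37 (Node 9 (Leaf 42) (Leaf 44) (Leaf 43)) (Leaf 46) (Leaf 45)))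 (Leaf 142) (Leaf 79)) (Leaf 58) (Leaf 57)) (Node 8 (Leaf 34) (Node 27 (Node 21 (Leaf 85) (Leaf 87) (Leaf 86)) (Leaf 36) (Leaf 33)) (Leaf 35))) (Leaf 72) (Leaf 84))) (Leaf 8)))) (Leaf 23) (Leaf 17)) (Node 41 (Node 26 (Node 10 (Leaf 58) (Node 36 (Node 37 (Node 28 (Node 25 (Leaf 69) (Leaf 73) (Node 22 (Leaf 70) (Leaf 72) (Leaf 71))) (Leaf 145) (Leaf 23)) (Leaf 146) (Leaf 46)) (Leaf 41) (Leaf 16)) (Leaf 57)) (Node 10 (Node 36 (Leaf 41) (Node 19 (Node 8 (Leaf 38) (Leaf 35) (Node 0 (Leaf 55) (Node 38 (Leaf 67) (Leaf 8) (Node 39 (Node 2 (Leaf 49) (Leaf 25) (Leaf 12)) (Leaf 51) (Leaf 50))) (Node 25 (Leaf 73) (Node 38 (Leaf 67) (Node 1 (Node 40 (Leaf 76) (Leaf 78) (Leaf 77)) (Leaf 61) (Leaf 5)) (Leaf 8)) (Leaf 75)))) (Leaf 142) (Leaf 79)) (Leaf 16)) (Leaf 58) (Leaf 57)) (Leaf 29)) (Leaf 68) (Leaf 54))) (Leaf 48) (Node 7 (Leaf 15) (Node 36 (Node 0 (Leaf 81) (Node 37 (Node 24 (Leaf 92) (Node 28 (Node 10 (Leaf 41) (Node 25 (Leaf 69) (Leaf 73) (Leaf 94)) (Leaf 57)) (Leaf 23) (Leaf 17)) (Leaf 93)) (Leaf 46) (Leaf 147)) (Leaf 91)) (Leaf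 16) (Leaf 148)) (Leaf 56)))) (Leaf 39))) (Node 24 (Leaf 99) (Leaf 92) (Node 25 (Leaf 100) (Leaf 69) (Node 36 (Node 10 (Leaf 41) (Node 22 (Leaf 84) (Node 14 (Leaf 62) (Leaf 72) (Node 0 (Leaf 101) (Node 32 (Node 26 (Leaf 103) (Leaf 58) (Node 7 (Leaf 15) (Node 27 (Leaf 32) (Leaf 149) (Node 20 (Leaf 105) (Node 17 (Leaf 106) (Leaf 107) (Leaf 21)) (Leaf 90))) (Leaf 104))) (Leaf 97) (Leaf 39)) (Leaf 102))) (Leaf 71)) (Leaf 73)) (Leaf 150) (Node 7 (Leaf 15) (Node 0 (Node 32 (Leaf 7) (Leaf 97) (Node 37 (Leaf 109) (Leaf 46) (Node 27 (Leaf 83) (Node 8 (Leaf 38) (Leaf 36) (Leaf 45)) (Leaf 32)))) (Node 23 (Node 32 (Node 1 (Leaf 4) (Node 6 (Leaf 9) (Node 31 (Node 28 (Leaf 17) (Leaf 23) (Node 18 (Leaf 18) (Node 17 (Leaf 20) (Leaf 22) (Leaf 21)) (Leaf 19))) (Leaf 60) (Node 28 (Node 15 (Leaf 26) (Node 18 (Leaf 19) (Leaf 59) (Node 20 (Leaf 31) (Leaf 37) (Node 27 (Leaf 32) (Node 14 (Leaf 48) (Node 16 (Leaf 111) (Leaf 113) (Node 19 (Node 22 (Node 8 (Leaf 34) (Leaf 36) (Node 26 (Leaf 70) (Node 37 (Node 9 (Leaf 42) (Leaf 44) (Leaf 112)) (Leaf 46) (Leaf 45)) (Leaf 35))) (Leaf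 72) (Leaf 71)) (Leaf 151) (Leaf 114))) (Leaf 90)) (Leaf 33)))) (Leaf 27)) (Leaf 23) (Leaf 17))) (Leaf 10)) (Leaf 5)) (Leaf 97) (Node 28 (Node 14 (Leaf 48) (Node 31 (Leaf 17) (Leaf 117) (Node 20 (Leaf 31) (Leaf 90) (Node 22 (Node 26 (Leaf 70) (Node 10 (Node 18 (Leaf 19) (Leaf 116) (Node 16 (Leaf 111) (Leaf 115) (Node 19 (Node 38 (Leaf 67) (Leaf 8) (Node 8 (Leaf 34) (Leaf 35) (Node 37 (Node 9 (Leaf 42) (Leaf 44) (Leaf 112)) (Leaf 46) (Leaf 45)))) (Leaf 142) (Leaf 114)))) (Leaf 58) (Leaf 73)) (Node 8 (Leaf 34) (Node 27 (Node 21 (Leaf 85) (Leaf 87) (Leaf 86)) (Leaf 36) (Leaf 33)) (Leaf 35))) (Leaf 72) (Leaf 71)))) (Leaf 39)) (Leaf 23) (Leaf 152))) (Node 14 (Leaf 62) (Leaf 48) (Node 32 (Node 26 (Leaf 103) (Leaf 123) (Node 27 (Leaf 32) (Leaf 153) (Node 12 (Leaf 118) (Leaf 121) (Node 1 (Leaf 4) (Node 13 (Leaf 119) (Leaf 120) (Node 6 (Leaf 9) (Node 8 (Leaf 38) (Node 31 (Node 28 (Leaf 17) (Leaf 23) (Node 18 (Leaf 18) (Node 17 (Leaf 20) (Leaf 22) (Leaf 21)) (Leaf 19))) (Leaf 60) (Node 28 (Node 20 (Leaf 31) (Node 15 (Leaf 26) (Leaf 37) (Leaf 27)) (Leaf 90))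 (Leaf 23) (Leaf 17))) (Leaf 35)) (Leaf 10))) (Leaf 5))))) (Leaf 97) (Leaf 39))) (Leaf 93)) (Leaf 110)) (Leaf 16))))) (Leaf 98)) (Leaf 140) (Node 7 (Leaf 15) (Node 28 (Node 4 (Leaf 127) (Node 13 (Leaf 129) (Node 19 (Node 31 (Leaf 17) (Node 26 (Node 0 (Leaf 154) (Node 11 (Node 32 (Leaf 28) (Leaf 97) (Node 27 (Node 10 (Leaf 58) (Node 25 (Leaf 69) (Leaf 73) (Leaf 100)) (Leaf 57)) (Leaf 134) (Leaf 32))) (Leaf 135) (Leaf 98)) (Leaf 155)) (Leaf 156) (Leaf 157)) (Node 26 (Node 0 (Leaf 154) (Node 32 (Leaf 131) (Leaf 97) (Node 10 (Leaf 58) (Node 25 (Node 23 (Leaf 94) (Leaf 120) (Node 36 (Node 11 (Leaf 69) (Node 24 (Leaf 132) (Leaf 92) (Leaf 93)) (Leaf 98)) (Leaf 16) (Leaf 148))) (Leaf 73) (Leaf 100)) (Leaf 57))) (Leaf 155)) (Node 10 (Node 36 (Leaf 41) (Leaf 16) (Node 23 (Node 14 (Leaf 48) (Node 25 (Leaf 73) (Node 11 (Node 20 (Leaf 31) (Leaf 90) (Node 22 (Node 38 (Leaf 67) (Leaf 89) (Node 8 (Leaf 34) (Leaf 35) (Node 37 (Node 9 (Leaf 42) (Leaf 112) (Leaf 43)) (Leaf 46) (Leaf 45)))) (Leaf 158) (Leaf 84))) (Leaf 69) (Leaf 98)) (Leaf 100)) (Leaf 62)) (Leaf 120) (Leaf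 148))) (Leaf 58) (Leaf 57)) (Leaf 157))) (Leaf 137) (Leaf 79)) (Leaf 119)) (Leaf 128)) (Leaf 23) (Leaf 159)) (Leaf 125))) (Leaf 3))) (Leaf 160) (Node 16 (Leaf 161) (Node 4 (Leaf 162) (Node 33 (Node 7 (Leaf 125) (Node 5 (Leaf 140) (Node 29 (Node 28 (Leaf 159) (Leaf 23) (Node 19 (Leaf 79) (Leaf 114) (Node 24 (Leaf 99) (Node 11 (Leaf 98) (Leaf 92) (Node 25 (Leaf 100) (Node 10 (Leaf 57) (Leaf 73) (Node 26 (Leaf 157) (Node 31 (Node 36 (Node 8 (Leaf 163) (Leaf 35) (Leaf 34)) (Leaf 16) (Leaf 41)) (Leaf 156) (Leaf 17)) (Leaf 58))) (Leaf 69))) (Leaf 132)))) (Leaf 3) (Leaf 1)) (Leaf 2)) (Leaf 15)) (Leaf 128) (Node 24 (Leaf 99) (Node 12 (Leaf 118) (Node 13 (Leaf 129) (Node 29 (Node 11 (Leaf 98) (Leaf 92) (Node 7 (Leaf 164) (Node 28 (Leaf 165) (Leaf 23) (Node 5 (Leaf 3) (Node 14 (Leaf 166) (Node 31 (Node 25 (Leaf 167) (Node 10 (Leaf 57) (Leaf 73) (Node 26 (Leaf 168) (Node 36 (Node 8 (Leaf 163) (Leaf 35) (Leaf 34)) (Leaf 16) (Leaf 41)) (Leaf 58))) (Leaf 69)) (Leaf 96) (Leaf 17)) (Leaf 62)) (Leaf 2))) (Leaf 15))) (Node 5 (Node 18 (Leaf 169) (Node 14 (Leaf 170) (Node 32 (Leaf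 97) (Leaf 39) (Node 26 (Leaf 171) (Node 0 (Node 7 (Node 27 (Leaf 172) (Node 28 (Leaf 23) (Leaf 19) (Node 20 (Leaf 173) (Leaf 90) (Leaf 31))) (Leaf 32)) (Leaf 104) (Leaf 15)) (Leaf 102) (Leaf 7)) (Leaf 103))) (Leaf 62)) (Leaf 18)) (Leaf 3) (Leaf 2)) (Leaf 1)) (Leaf 119)) (Leaf 174)) (Leaf 175))) (Leaf 127)) (Leaf 111))) (Leaf 176) (Node 12 (Leaf 177) (Node 30 (Node 4 (Leaf 127) (Node 33 (Node 24 (Leaf 175) (Node 13 (Leaf 119) (Node 29 (Leaf 1) (Node 5 (Leaf 2) (Leaf 3) (Node 18 (Leaf 18) (Node 14 (Leaf 62) (Node 32 (Node 26 (Leaf 103) (Node 0 (Leaf 7) (Leaf 102) (Node 7 (Leaf 15) (Leaf 104) (Node 27 (Leaf 32) (Node 28 (Node 20 (Leaf 31) (Leaf 90) (Leaf 173)) (Leaf 19) (Leaf 23)) (Leaf 172)))) (Leaf 171)) (Leaf 39) (Leaf 97)) (Leaf 170)) (Leaf 169))) (Node 11 (Node 7 (Leaf 15) (Node 28 (Node 5 (Leaf 2) (Node 14 (Leaf 62) (Node 31 (Leaf 17) (Leaf 96) (Node 25 (Leaf 69) (Node 10 (Node 26 (Leaf 58) (Node 36 (Leaf 41) (Leaf 16) (Node 8 (Leaf 34) (Leaf 35) (Leaf 163))) (Leaf 168)) (Leaf 73) (Leaf 57)) (Leaf 167))) (Leaf 166)) (Leaf 3)) (Leaf 23) (Leaf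 165)) (Leaf 164)) (Leaf 92) (Leaf 98))) (Leaf 129)) (Leaf 99)) (Leaf 128) (Node 7 (Leaf 15) (Node 5 (Leaf 2) (Node 29 (Leaf 1) (Leaf 3) (Node 28 (Node 19 (Node 24 (Leaf 132) (Node 11 (Node 25 (Leaf 69) (Node 10 (Node 26 (Leaf 58) (Node 31 (Leaf 17) (Leaf 156) (Node 36 (Leaf 41) (Leaf 16) (Node 8 (Leaf 34) (Leaf 35) (Leaf 163)))) (Leaf 157)) (Leaf 73) (Leaf 57)) (Leaf 100)) (Leaf 92) (Leaf 98)) (Leaf 99)) (Leaf 178) (Leaf 79)) (Leaf 23) (Leaf 159))) (Leaf 140)) (Leaf 125))) (Leaf 162)) (Leaf 160) (Node 16 (Leaf 161) (Node 29 (Node 7 (Leaf 179) (Node 24 (Leaf 180) (Node 11 (Leaf 98) (Leaf 92) (Node 28 (Leaf 181) (Leaf 23) (Node 5 (Leaf 3) (Node 25 (Leaf 182) (Node 10 (Leaf 57) (Leaf 73) (Node 26 (Leaf 183) (Node 31 (Node 36 (Node 8 (Leaf 184) (Leaf 35) (Leaf 34)) (Leaf 16) (Leaf 41)) (Leaf 156) (Leaf 17)) (Leaf 58))) (Leaf 69)) (Leaf 2)))) (Leaf 99)) (Leaf 15)) (Node 5 (Node 24 (Leaf 185) (Node 18 (Leaf 186) (Node 13 (Leaf 187) (Node 33 (Leaf 140) (Leaf 119) (Node 31 (Leaf 188) (Node 23 (Node 14 (Leaf 48) (Node 32 (Leaf 97) (Leaf 39) (Node 26 (Leaf 189) (Node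 0 (Node 7 (Node 27 (Leaf 122) (Node 28 (Leaf 23) (Leaf 19) (Node 25 (Leaf 94) (Node 20 (Node 15 (Leaf 37) (Leaf 59) (Leaf 26)) (Leaf 90) (Leaf 31)) (Leaf 100))) (Leaf 32)) (Leaf 104) (Leaf 15)) (Leaf 102) (Leaf 7)) (Leaf 103))) (Leaf 62)) (Leaf 121) (Node 11 (Node 25 (Leaf 69) (Node 36 (Leaf 124) (Node 7 (Node 28 (Leaf 23) (Leaf 19) (Node 14 (Leaf 190) (Node 32 (Leaf 97) (Leaf 39) (Node 26 (Leaf 191) (Node 0 (Node 27 (Leaf 192) (Node 20 (Node 15 (Leaf 37) (Leaf 59) (Leaf 26)) (Leaf 90) (Leaf 31)) (Leaf 32)) (Leaf 102) (Leaf 193)) (Leaf 194))) (Leaf 48))) (Leaf 16) (Leaf 15)) (Node 10 (Node 22 (Node 14 (Leaf 72) (Node 0 (Node 32 (Leaf 97) (Leaf 39) (Node 26 (Leaf 58) (Node 7 (Node 27 (Leaf 108) (Node 28 (Leaf 23) (Leaf 19) (Node 20 (Node 15 (Leaf 37) (Leaf 59) (Leaf 26)) (Leaf 90) (Leaf 31))) (Leaf 32)) (Leaf 104) (Leaf 15)) (Leaf 194))) (Leaf 102) (Leaf 195)) (Leaf 48)) (Leaf 158) (Leaf 84)) (Leaf 73) (Leaf 41))) (Leaf 94)) (Leaf 92) (Node 38 (Leaf 196) (Node 0 (Node 25 (Leaf 197) (Node 36 (Leaf 198) (Node 7 (Node 28 (Leaf 23) (Leaf 19) (Node 14 (Leaf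 190) (Node 32 (Leaf 97) (Leaf 39) (Node 26 (Leaf 191) (Node 27 (Leaf 192) (Node 20 (Node 15 (Leaf 37) (Leaf 59) (Leaf 26)) (Leaf 90) (Leaf 31)) (Leaf 32)) (Leaf 28))) (Leaf 48))) (Leaf 16) (Leaf 15)) (Node 32 (Leaf 97) (Node 10 (Node 14 (Node 9 (Leaf 199) (Leaf 112) (Leaf 43)) (Leaf 39) (Leaf 48)) (Leaf 73) (Leaf 41)) (Leaf 30))) (Leaf 69)) (Leaf 8) (Node 32 (Leaf 97) (Node 27 (Node 7 (Leaf 192) (Node 39 (Leaf 200) (Leaf 50) (Leaf 51)) (Leaf 15)) (Leaf 32) (Leaf 83)) (Leaf 7))) (Leaf 6)))) (Node 28 (Node 7 (Leaf 23) (Node 26 (Node 23 (Leaf 189) (Leaf 121) (Node 27 (Node 10 (Leaf 58) (Leaf 57) (Node 36 (Node 0 (Leaf 198) (Node 38 (Leaf 196) (Leaf 8) (Leaf 67)) (Leaf 201)) (Leaf 16) (Leaf 41))) (Leaf 202) (Leaf 203))) (Leaf 29) (Leaf 204)) (Leaf 15)) (Leaf 19) (Leaf 17)))) (Leaf 129)) (Leaf 18)) (Leaf 99)) (Leaf 3) (Leaf 2)) (Leaf 1)) (Leaf 111))) (Leaf 118))) (Node 34 (Node 30 (Node 29 (Leaf 1) (Node 5 (Leaf 2) (Leaf 3) (Node 33 (Node 11 (Node 32 (Node 1 (Leaf 4) (Leaf 5) (Node 38 (Leaf 6) (Node 0 (Leaf 7) (Leaf 8) (Node 6 (Leaf 9)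 (Leaf 10) (Node 31 (Node 2 (Leaf 11) (Leaf 12) (Node 36 (Leaf 13) (Node 37 (Leaf 14) (Node 7 (Leaf 15) (Leaf 16) (Node 28 (Leaf 17) (Node 18 (Leaf 18) (Leaf 19) (Node 17 (Leaf 20) (Leaf 21) (Leaf 22))) (Leaf 23))) (Leaf 24)) (Leaf 25))) (Node 15 (Leaf 26) (Leaf 27) (Node 18 (Leaf 18) (Node 26 (Leaf 28) (Node 7 (Leaf 15) (Leaf 29) (Node 36 (Leaf 30) (Node 28 (Node 20 (Leaf 31) (Node 27 (Leaf 32) (Leaf 33) (Node 8 (Leaf 34) (Leaf 35) (Leaf 36))) (Leaf 37)) (Leaf 19) (Leaf 23)) (Leaf 16))) (Node 10 (Node 19 (Node 8 (Leaf 38) (Node 27 (Leaf 32) (Leaf 36) (Node 14 (Leaf 39) (Leaf 40) (Node 36 (Leaf 41) (Node 23 (Node 7 (Leaf 15) (Leaf 16) (Node 37 (Node 9 (Leaf 42) (Leaf 43) (Leaf 44)) (Leaf 45) (Leaf 46))) (Leaf 141) (Leaf 48)) (Node 7 (Leaf 15) (Node 23 (Node 41 (Node 39 (Node 2 (Leaf 49) (Leaf 12) (Leaf 25)) (Leaf 50) (Leaf 51)) (Leaf 54) (Leaf 55)) (Leaf 56) (Leaf 48)) (Leaf 16))))) (Leaf 35)) (Leaf 52) (Leaf 142)) (Leaf 57) (Leaf 58))) (Leaf 59))) (Leaf 60)))) (Leaf 61))) (Node 14 (Leaf 62) (Leaf 39) (Node 31 (Node 27 (Leaf 63) (Leaf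 32) (Node 28 (Leaf 17) (Leaf 144) (Node 7 (Leaf 15) (Node 26 (Leaf 65) (Leaf 29) (Node 36 (Leaf 13) (Leaf 16) (Node 23 (Node 37 (Leaf 14) (Leaf 46) (Node 10 (Node 18 (Leaf 18) (Node 41 (Node 19 (Node 1 (Leaf 143) (Leaf 5) (Node 38 (Leaf 67) (Node 2 (Leaf 11) (Leaf 12) (Leaf 25)) (Leaf 61))) (Leaf 52) (Leaf 142)) (Leaf 54) (Leaf 68)) (Leaf 19)) (Leaf 57) (Leaf 58))) (Leaf 56) (Leaf 48)))) (Leaf 23)))) (Node 23 (Node 7 (Leaf 15) (Node 41 (Node 26 (Node 10 (Leaf 58) (Leaf 57) (Node 36 (Node 37 (Node 28 (Node 25 (Leaf 69) (Node 22 (Leaf 70) (Leaf 71) (Leaf 72)) (Leaf 73)) (Leaf 23) (Leaf 145)) (Leaf 46) (Leaf 146)) (Leaf 16) (Leaf 41))) (Leaf 29) (Node 10 (Node 36 (Leaf 41) (Leaf 16) (Node 19 (Node 8 (Leaf 38) (Node 0 (Leaf 55) (Node 25 (Leaf 73) (Leaf 75) (Node 38 (Leaf 67) (Leaf 8) (Node 1 (Node 40 (Leaf 76) (Leaf 77) (Leaf 78)) (Leaf 5) (Leaf 61)))) (Node 38 (Leaf 67) (Node 39 (Node 2 (Leaf 49) (Leaf 12) (Leaf 25)) (Leaf 50) (Leaf 51)) (Leaf 8))) (Leaf 35)) (Leaf 79) (Leaf 142))) (Leaf 57) (Leaf 58))) (Leaf 54) (Leaf 68)) (Node 28 (Node 20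 (Leaf 31) (Node 38 (Leaf 6) (Node 0 (Node 36 (Leaf 81) (Node 37 (Leaf 82) (Node 27 (Leaf 83) (Leaf 33) (Node 8 (Leaf 34) (Leaf 45) (Leaf 36))) (Leaf 46)) (Leaf 16)) (Leaf 8) (Node 36 (Node 10 (Leaf 41) (Leaf 57) (Node 25 (Leaf 69) (Node 22 (Leaf 84) (Leaf 71) (Leaf 72)) (Leaf 73))) (Node 22 (Node 26 (Leaf 70) (Node 8 (Leaf 34) (Leaf 35) (Node 27 (Node 21 (Leaf 85) (Leaf 86) (Leaf 87)) (Leaf 33) (Leaf 36))) (Node 10 (Node 19 (Node 8 (Leaf 34) (Node 37 (Node 9 (Leaf 42) (Leaf 43) (Leaf 44)) (Leaf 45) (Leaf 46)) (Leaf 35)) (Leaf 79) (Leaf 142)) (Leaf 57) (Leaf 58))) (Leaf 84) (Leaf 72)) (Leaf 16))) (Leaf 89)) (Leaf 90)) (Leaf 17) (Leaf 23))) (Node 7 (Leaf 15) (Leaf 56) (Node 36 (Node 0 (Leaf 81) (Leaf 91) (Node 37 (Node 24 (Leaf 92) (Leaf 93) (Node 28 (Node 10 (Leaf 41) (Leaf 57) (Node 25 (Leaf 69) (Leaf 94) (Leaf 73))) (Leaf 17) (Leaf 23))) (Leaf 147) (Leaf 46))) (Leaf 148) (Leaf 16))) (Leaf 48)) (Leaf 96))) (Leaf 97)) (Leaf 98) (Node 24 (Leaf 99) (Node 25 (Leaf 100) (Node 36 (Node 10 (Leaf 41) (Leaf 73) (Node 22 (Leaf 84) (Leaf 71) (Node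 14 (Leaf 62) (Node 0 (Leaf 101) (Leaf 102) (Node 32 (Node 26 (Leaf 103) (Node 7 (Leaf 15) (Leaf 104) (Node 27 (Leaf 32) (Node 20 (Leaf 105) (Leaf 90) (Node 17 (Leaf 106) (Leaf 21) (Leaf 107))) (Leaf 149))) (Leaf 58)) (Leaf 39) (Leaf 97))) (Leaf 72)))) (Node 7 (Leaf 15) (Leaf 16) (Node 0 (Node 32 (Leaf 7) (Node 37 (Leaf 109) (Node 27 (Leaf 83) (Leaf 32) (Node 8 (Leaf 38) (Leaf 45) (Leaf 36))) (Leaf 46)) (Leaf 97)) (Leaf 110) (Node 23 (Node 32 (Node 1 (Leaf 4) (Leaf 5) (Node 6 (Leaf 9) (Leaf 10) (Node 31 (Node 28 (Leaf 17) (Node 18 (Leaf 18) (Leaf 19) (Node 17 (Leaf 20) (Leaf 21) (Leaf 22))) (Leaf 23)) (Node 28 (Node 15 (Leaf 26) (Leaf 27) (Node 18 (Leaf 19) (Node 20 (Leaf 31) (Node 27 (Leaf 32) (Leaf 33) (Node 14 (Leaf 48) (Leaf 90) (Node 16 (Leaf 111) (Node 19 (Node 22 (Node 8 (Leaf 34) (Node 26 (Leaf 70) (Leaf 35) (Node 37 (Node 9 (Leaf 42) (Leaf 112) (Leaf 44)) (Leaf 45) (Leaf 46))) (Leaf 36)) (Leaf 71) (Leaf 72)) (Leaf 114) (Leaf 151)) (Leaf 113)))) (Leaf 37)) (Leaf 59))) (Leaf 17) (Leaf 23)) (Leaf 60)))) (Node 28 (Node 14 (Leaf 48) (Leaf 39)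 (Node 31 (Leaf 17) (Node 20 (Leaf 31) (Node 22 (Node 26 (Leaf 70) (Node 8 (Leaf 34) (Leaf 35) (Node 27 (Node 21 (Leaf 85) (Leaf 86) (Leaf 87)) (Leaf 33) (Leaf 36))) (Node 10 (Node 18 (Leaf 19) (Node 16 (Leaf 111) (Node 19 (Node 38 (Leaf 67) (Node 8 (Leaf 34) (Node 37 (Node 9 (Leaf 42) (Leaf 112) (Leaf 44)) (Leaf 45) (Leaf 46)) (Leaf 35)) (Leaf 8)) (Leaf 114) (Leaf 142)) (Leaf 115)) (Leaf 116)) (Leaf 73) (Leaf 58))) (Leaf 71) (Leaf 72)) (Leaf 90)) (Leaf 117))) (Leaf 152) (Leaf 23)) (Leaf 97)) (Leaf 93) (Node 14 (Leaf 62) (Node 32 (Node 26 (Leaf 103) (Node 27 (Leaf 32) (Node 12 (Leaf 118) (Node 1 (Leaf 4) (Leaf 5) (Node 13 (Leaf 119) (Node 6 (Leaf 9) (Leaf 10) (Node 8 (Leaf 38) (Leaf 35) (Node 31 (Node 28 (Leaf 17) (Node 18 (Leaf 18) (Leaf 19) (Node 17 (Leaf 20) (Leaf 21) (Leaf 22))) (Leaf 23)) (Node 28 (Node 20 (Leaf 31) (Leaf 90) (Node 15 (Leaf 26) (Leaf 27) (Leaf 37))) (Leaf 17) (Leaf 23)) (Leaf 60)))) (Leaf 120))) (Leaf 121)) (Leaf 153)) (Leaf 123)) (Leaf 39) (Leaf 97)) (Leaf 48))))) (Leaf 150)) (Leaf 69)) (Leaf 92))) (Node 7 (Leaf 15)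 (Leaf 125) (Node 28 (Node 4 (Leaf 127) (Leaf 128) (Node 13 (Leaf 129) (Leaf 119) (Node 19 (Node 31 (Leaf 17) (Node 26 (Node 0 (Leaf 154) (Leaf 155) (Node 32 (Leaf 131) (Node 10 (Leaf 58) (Leaf 57) (Node 25 (Node 23 (Leaf 94) (Node 36 (Node 11 (Leaf 69) (Leaf 98) (Node 24 (Leaf 132) (Leaf 93) (Leaf 92))) (Leaf 148) (Leaf 16)) (Leaf 120)) (Leaf 100) (Leaf 73))) (Leaf 97))) (Leaf 157) (Node 10 (Node 36 (Leaf 41) (Node 23 (Node 14 (Leaf 48) (Leaf 62) (Node 25 (Leaf 73) (Leaf 100) (Node 11 (Node 20 (Leaf 31) (Node 22 (Node 38 (Leaf 67) (Node 8 (Leaf 34) (Node 37 (Node 9 (Leaf 42) (Leaf 43) (Leaf 112)) (Leaf 45) (Leaf 46)) (Leaf 35)) (Leaf 89)) (Leaf 84) (Leaf 158)) (Leaf 90)) (Leaf 98) (Leaf 69)))) (Leaf 148) (Leaf 120)) (Leaf 16)) (Leaf 57) (Leaf 58))) (Node 26 (Node 0 (Leaf 154) (Leaf 155) (Node 11 (Node 32 (Leaf 28) (Node 27 (Node 10 (Leaf 58) (Leaf 57) (Node 25 (Leaf 69) (Leaf 100) (Leaf 73))) (Leaf 32) (Leaf 134)) (Leaf 97)) (Leaf 98) (Leaf 135))) (Leaf 157) (Leaf 156))) (Leaf 79) (Leaf 137)))) (Leaf 159) (Leaf 23))) (Leaf 140))) (Node 5 (Leaf 2) (Node 33 (Node 11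 (Node 32 (Node 1 (Leaf 4) (Node 38 (Leaf 6) (Leaf 61) (Node 0 (Leaf 7) (Node 6 (Leaf 9) (Node 31 (Node 2 (Leaf 11) (Node 36 (Leaf 13) (Leaf 25) (Node 37 (Leaf 14) (Leaf 24) (Node 7 (Leaf 15) (Node 28 (Leaf 17) (Leaf 23) (Node 18 (Leaf 18) (Node 17 (Leaf 20) (Leaf 22) (Leaf 21)) (Leaf 19))) (Leaf 16)))) (Leaf 12)) (Leaf 60) (Node 15 (Leaf 26) (Node 18 (Leaf 18) (Leaf 59) (Node 26 (Leaf 28) (Node 10 (Node 8 (Leaf 38) (Leaf 35) (Node 27 (Leaf 32) (Node 14 (Leaf 39) (Node 36 (Leaf 41) (Node 7 (Leaf 15) (Leaf 16) (Node 23 (Node 41 (Node 19 (Node 39 (Node 2 (Leaf 49) (Leaf 25) (Leaf 12)) (Leaf 51) (Leaf 50)) (Leaf 53) (Leaf 52)) (Leaf 55) (Leaf 54)) (Leaf 48) (Leaf 56))) (Node 23 (Node 7 (Leaf 15) (Node 37 (Node 9 (Leaf 42) (Leaf 44) (Leaf 43)) (Leaf 46) (Leaf 45)) (Leaf 16)) (Leaf 48) (Leaf 47))) (Leaf 40)) (Leaf 36))) (Leaf 58) (Leaf 57)) (Node 7 (Leaf 15) (Node 36 (Leaf 30) (Leaf 16) (Node 28 (Node 20 (Leaf 31) (Leaf 37) (Node 27 (Leaf 32) (Node 8 (Leaf 34) (Leaf 36) (Leaf 35)) (Leaf 33))) (Leaf 23) (Leaf 19))) (Leaf 29)))) (Leaf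 27))) (Leaf 10)) (Leaf 8))) (Leaf 5)) (Leaf 97) (Node 14 (Leaf 62) (Node 31 (Node 27 (Leaf 63) (Node 28 (Leaf 17) (Node 7 (Leaf 15) (Leaf 23) (Node 26 (Leaf 65) (Node 36 (Leaf 13) (Node 23 (Node 37 (Leaf 14) (Node 10 (Node 18 (Leaf 18) (Leaf 19) (Node 41 (Node 1 (Leaf 66) (Node 38 (Leaf 67) (Leaf 61) (Node 2 (Leaf 11) (Leaf 25) (Leaf 12))) (Leaf 5)) (Leaf 68) (Leaf 54))) (Leaf 58) (Leaf 57)) (Leaf 46)) (Leaf 48) (Leaf 56)) (Leaf 16)) (Leaf 29))) (Leaf 64)) (Leaf 32)) (Leaf 96) (Node 23 (Node 7 (Leaf 15) (Node 28 (Node 20 (Leaf 31) (Leaf 90) (Node 38 (Leaf 6) (Leaf 89) (Node 0 (Node 36 (Leaf 81) (Leaf 16) (Node 37 (Leaf 82) (Leaf 46) (Node 27 (Leaf 83) (Node 8 (Leaf 34) (Leaf 36) (Leaf 45)) (Leaf 33)))) (Node 36 (Node 10 (Leaf 41) (Node 25 (Leaf 69) (Leaf 73) (Node 22 (Leaf 84) (Leaf 72) (Leaf 71))) (Leaf 57)) (Leaf 16) (Node 22 (Node 26 (Leaf 70) (Node 10 (Node 19 (Node 8 (Leaf 34) (Leaf 35) (Node 37 (Node 9 (Leaf 42) (Leaf 44) (Leaf 43)) (Leaf 46) (Leaf 45))) (Leaf 88) (Leaf 79)) (Leaf 58) (Leaf 57)) (Node 8 (Leaf 34) (Node 27 (Node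 21 (Leaf 85) (Leaf 87) (Leaf 86)) (Leaf 36) (Leaf 33)) (Leaf 35))) (Leaf 72) (Leaf 84))) (Leaf 8)))) (Leaf 23) (Leaf 17)) (Node 41 (Node 26 (Node 10 (Leaf 58) (Node 36 (Node 37 (Node 25 (Leaf 69) (Leaf 73) (Node 22 (Leaf 70) (Leaf 72) (Leaf 71))) (Leaf 74) (Leaf 46)) (Leaf 41) (Leaf 16)) (Leaf 57)) (Node 10 (Node 36 (Leaf 41) (Node 8 (Leaf 38) (Leaf 35) (Node 0 (Leaf 55) (Node 19 (Node 38 (Leaf 67) (Leaf 8) (Node 39 (Node 2 (Leaf 49) (Leaf 25) (Leaf 12)) (Leaf 51) (Leaf 50))) (Leaf 53) (Leaf 79)) (Node 25 (Leaf 73) (Node 38 (Leaf 67) (Node 19 (Node 1 (Node 40 (Leaf 76) (Leaf 78) (Leaf 77)) (Leaf 61) (Leaf 5)) (Leaf 80) (Leaf 79)) (Leaf 8)) (Leaf 75)))) (Leaf 16)) (Leaf 58) (Leaf 57)) (Leaf 29)) (Leaf 68) (Leaf 54))) (Leaf 48) (Node 7 (Leaf 15) (Node 36 (Node 0 (Leaf 81) (Node 37 (Node 24 (Leaf 92) (Node 28 (Node 10 (Leaf 41) (Node 25 (Leaf 69) (Leaf 73) (Leaf 94)) (Leaf 57)) (Leaf 23) (Leaf 17)) (Leaf 93)) (Leaf 46) (Leaf 95)) (Leaf 91)) (Leaf 16) (Leaf 47)) (Leaf 56)))) (Leaf 39))) (Node 24 (Leaf 99) (Leaf 92) (Node 25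 (Leaf 100) (Leaf 69) (Node 36 (Node 10 (Leaf 41) (Node 22 (Leaf 84) (Node 14 (Leaf 62) (Leaf 72) (Node 0 (Leaf 101) (Node 32 (Node 26 (Leaf 103) (Leaf 58) (Node 7 (Leaf 15) (Node 27 (Leaf 32) (Leaf 108) (Node 20 (Leaf 105) (Node 17 (Leaf 106) (Leaf 107) (Leaf 21)) (Leaf 90))) (Leaf 104))) (Leaf 97) (Leaf 39)) (Leaf 102))) (Leaf 71)) (Leaf 73)) (Leaf 124) (Node 7 (Leaf 15) (Node 0 (Node 32 (Leaf 7) (Leaf 97) (Node 37 (Leaf 109) (Leaf 46) (Node 27 (Leaf 83) (Node 8 (Leaf 38) (Leaf 36) (Leaf 45)) (Leaf 32)))) (Node 23 (Node 32 (Node 1 (Leaf 4) (Node 6 (Leaf 9) (Node 31 (Node 28 (Leaf 17) (Leaf 23) (Node 18 (Leaf 18) (Node 17 (Leaf 20) (Leaf 22) (Leaf 21)) (Leaf 19))) (Leaf 60) (Node 28 (Node 15 (Leaf 26) (Node 18 (Leaf 19) (Leaf 59) (Node 20 (Leaf 31) (Leaf 37) (Node 27 (Leaf 32) (Node 14 (Leaf 48) (Node 16 (Leaf 111) (Leaf 113) (Node 22 (Node 8 (Leaf 34) (Leaf 36) (Node 26 (Leaf 70) (Node 37 (Node 9 (Leaf 42) (Leaf 44) (Leaf 112)) (Leaf 46) (Leaf 45)) (Leaf 35))) (Leaf 72) (Leaf 71))) (Leaf 90)) (Leaf 33)))) (Leaf 27)) (Leaf 23) (Leaf 17))) (Leaf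 10)) (Leaf 5)) (Leaf 97) (Node 28 (Node 14 (Leaf 48) (Node 31 (Leaf 17) (Leaf 117) (Node 20 (Leaf 31) (Leaf 90) (Node 22 (Node 26 (Leaf 70) (Node 10 (Node 18 (Leaf 19) (Leaf 116) (Node 16 (Leaf 111) (Leaf 115) (Node 19 (Node 38 (Leaf 67) (Leaf 8) (Node 8 (Leaf 34) (Leaf 35) (Node 37 (Node 9 (Leaf 42) (Leaf 44) (Leaf 112)) (Leaf 46) (Leaf 45)))) (Leaf 88) (Leaf 114)))) (Leaf 58) (Leaf 73)) (Node 8 (Leaf 34) (Node 27 (Node 21 (Leaf 85) (Leaf 87) (Leaf 86)) (Leaf 36) (Leaf 33)) (Leaf 35))) (Leaf 72) (Leaf 71)))) (Leaf 39)) (Leaf 23) (Leaf 64))) (Node 14 (Leaf 62) (Leaf 48) (Node 32 (Node 26 (Leaf 103) (Leaf 123) (Node 27 (Leaf 32) (Leaf 122) (Node 12 (Leaf 118) (Leaf 121) (Node 1 (Leaf 4) (Node 13 (Leaf 119) (Leaf 120) (Node 6 (Leaf 9) (Node 8 (Leaf 38) (Node 31 (Node 28 (Leaf 17) (Leaf 23) (Node 18 (Leaf 18) (Node 17 (Leaf 20) (Leaf 22) (Leaf 21)) (Leaf 19))) (Leaf 60) (Node 28 (Node 20 (Leaf 31) (Node 15 (Leaf 26) (Leaf 37) (Leaf 27)) (Leaf 90)) (Leaf 23) (Leaf 17))) (Leaf 35)) (Leaf 10))) (Leaf 5))))) (Leaf 97) (Leaf 39))) (Leaf 93)) (Leaf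 110)) (Leaf 16))))) (Leaf 98)) (Leaf 140) (Node 7 (Leaf 15) (Node 37 (Node 0 (Leaf 109) (Node 28 (Node 4 (Leaf 127) (Node 13 (Leaf 129) (Node 19 (Node 2 (Leaf 24) (Node 31 (Leaf 17) (Node 26 (Node 11 (Node 32 (Leaf 28) (Leaf 97) (Node 27 (Node 10 (Leaf 58) (Node 25 (Leaf 69) (Leaf 73) (Leaf 100)) (Leaf 57)) (Leaf 134) (Leaf 32))) (Leaf 135) (Leaf 98)) (Leaf 136) (Leaf 133)) (Node 26 (Node 32 (Leaf 131) (Leaf 97) (Node 10 (Leaf 58) (Node 25 (Node 23 (Leaf 94) (Leaf 120) (Node 36 (Node 11 (Leaf 69) (Node 24 (Leaf 132) (Leaf 92) (Leaf 93)) (Leaf 98)) (Leaf 25) (Leaf 47))) (Leaf 73) (Leaf 100)) (Leaf 57))) (Node 10 (Node 36 (Leaf 41) (Leaf 25) (Node 9 (Leaf 42) (Leaf 44) (Leaf 43))) (Leaf 58) (Leaf 57)) (Leaf 133))) (Leaf 130)) (Leaf 137) (Leaf 79)) (Leaf 119)) (Leaf 128)) (Leaf 23) (Leaf 138)) (Leaf 126)) (Leaf 46) (Leaf 139)) (Leaf 125))) (Leaf 3))) (Node 16 (Leaf 161) (Leaf 111) (Node 4 (Leaf 162) (Leaf 127) (Node 33 (Node 7 (Leaf 125) (Leaf 15) (Node 5 (Leaf 140) (Leaf 2) (Node 29 (Node 28 (Leaf 159) (Node 19 (Leaf 79) (Node 24 (Leaf 99) (Leaf 132) (Node 11 (Leaf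 98) (Node 25 (Leaf 100) (Leaf 69) (Node 10 (Leaf 57) (Node 26 (Leaf 157) (Leaf 58) (Node 31 (Node 36 (Node 8 (Leaf 163) (Leaf 34) (Leaf 35)) (Leaf 41) (Leaf 16)) (Leaf 17) (Leaf 156))) (Leaf 73))) (Leaf 92))) (Leaf 114)) (Leaf 23)) (Leaf 1) (Leaf 3)))) (Node 24 (Leaf 99) (Leaf 175) (Node 12 (Leaf 118) (Leaf 174) (Node 13 (Leaf 129) (Leaf 119) (Node 29 (Node 11 (Leaf 98) (Node 7 (Leaf 164) (Leaf 15) (Node 28 (Leaf 165) (Node 5 (Leaf 3) (Leaf 2) (Node 14 (Leaf 166) (Leaf 62) (Node 31 (Node 25 (Leaf 167) (Leaf 69) (Node 10 (Leaf 57) (Node 26 (Leaf 168) (Leaf 58) (Node 36 (Node 8 (Leaf 163) (Leaf 34) (Leaf 35)) (Leaf 41) (Leaf 16))) (Leaf 73))) (Leaf 17) (Leaf 96)))) (Leaf 23))) (Leaf 92)) (Leaf 1) (Node 5 (Node 18 (Leaf 169) (Leaf 18) (Node 14 (Leaf 170) (Leaf 62) (Node 32 (Leaf 97) (Node 26 (Leaf 171) (Leaf 103) (Node 0 (Node 7 (Node 27 (Leaf 172) (Leaf 32) (Node 28 (Leaf 23) (Node 20 (Leaf 173) (Leaf 31) (Leaf 90)) (Leaf 19))) (Leaf 15) (Leaf 104)) (Leaf 7) (Leaf 102))) (Leaf 39)))) (Leaf 2) (Leaf 3)))))) (Leaf 128)))) (Leaf 160)) (Node 12 (Leaf 177) (Leaf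 118) (Node 30 (Node 4 (Leaf 127) (Leaf 162) (Node 33 (Node 24 (Leaf 175) (Leaf 99) (Node 13 (Leaf 119) (Leaf 129) (Node 29 (Leaf 1) (Node 11 (Node 7 (Leaf 15) (Leaf 164) (Node 28 (Node 5 (Leaf 2) (Leaf 3) (Node 14 (Leaf 62) (Leaf 166) (Node 31 (Leaf 17) (Node 25 (Leaf 69) (Leaf 167) (Node 10 (Node 26 (Leaf 58) (Leaf 168) (Node 36 (Leaf 41) (Node 8 (Leaf 34) (Leaf 163) (Leaf 35)) (Leaf 16))) (Leaf 57) (Leaf 73))) (Leaf 96)))) (Leaf 165) (Leaf 23))) (Leaf 98) (Leaf 92)) (Node 5 (Leaf 2) (Node 18 (Leaf 18) (Leaf 169) (Node 14 (Leaf 62) (Leaf 170) (Node 32 (Node 26 (Leaf 103) (Leaf 171) (Node 0 (Leaf 7) (Node 7 (Leaf 15) (Node 27 (Leaf 32) (Leaf 172) (Node 28 (Node 20 (Leaf 31) (Leaf 173) (Leaf 90)) (Leaf 23) (Leaf 19))) (Leaf 104)) (Leaf 102))) (Leaf 97) (Leaf 39)))) (Leaf 3))))) (Node 7 (Leaf 15) (Leaf 125) (Node 5 (Leaf 2) (Leaf 140) (Node 29 (Leaf 1) (Node 28 (Node 19 (Node 24 (Leaf 132) (Leaf 99) (Node 11 (Node 25 (Leaf 69) (Leaf 100) (Node 10 (Node 26 (Leaf 58) (Leaf 157) (Node 31 (Leaf 17) (Node 36 (Leaf 41) (Node 8 (Leaf 34) (Leaf 163) (Leaf 35)) (Leaf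 16)) (Leaf 156))) (Leaf 57) (Leaf 73))) (Leaf 98) (Leaf 92))) (Leaf 79) (Leaf 178)) (Leaf 159) (Leaf 23)) (Leaf 3)))) (Leaf 128))) (Node 16 (Leaf 161) (Leaf 111) (Node 29 (Node 7 (Leaf 179) (Leaf 15) (Node 24 (Leaf 180) (Leaf 99) (Node 11 (Leaf 98) (Node 28 (Leaf 181) (Node 5 (Leaf 3) (Leaf 2) (Node 25 (Leaf 182) (Leaf 69) (Node 10 (Leaf 57) (Node 26 (Leaf 183) (Leaf 58) (Node 31 (Node 36 (Node 8 (Leaf 184) (Leaf 34) (Leaf 35)) (Leaf 41) (Leaf 16)) (Leaf 17) (Leaf 156))) (Leaf 73)))) (Leaf 23)) (Leaf 92)))) (Leaf 1) (Node 5 (Node 24 (Leaf 185) (Leaf 99) (Node 18 (Leaf 186) (Leaf 18) (Node 13 (Leaf 187) (Leaf 129) (Node 33 (Leaf 140) (Node 31 (Leaf 188) (Node 28 (Node 7 (Leaf 23) (Leaf 15) (Node 26 (Node 23 (Leaf 189) (Node 27 (Node 10 (Leaf 58) (Node 36 (Node 0 (Leaf 198) (Leaf 201) (Node 38 (Leaf 196) (Leaf 67) (Leaf 8))) (Leaf 41) (Leaf 16)) (Leaf 57)) (Leaf 203) (Leaf 202)) (Leaf 121)) (Leaf 204) (Leaf 29))) (Leaf 17) (Leaf 19)) (Node 23 (Node 14 (Leaf 48) (Leaf 62) (Node 32 (Leaf 97) (Node 26 (Leaf 189) (Leaf 103) (Node 0 (Node 7 (Node 27 (Leaf 122) (Leaf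 32) (Node 28 (Leaf 23) (Node 25 (Leaf 94) (Leaf 100) (Node 20 (Node 15 (Leaf 37) (Leaf 26) (Leaf 59)) (Leaf 31) (Leaf 90))) (Leaf 19))) (Leaf 15) (Leaf 104)) (Leaf 7) (Leaf 102))) (Leaf 39))) (Node 11 (Node 25 (Leaf 69) (Leaf 94) (Node 36 (Leaf 124) (Node 10 (Node 22 (Node 14 (Leaf 72) (Leaf 48) (Node 0 (Node 32 (Leaf 97) (Node 26 (Leaf 58) (Leaf 194) (Node 7 (Node 27 (Leaf 108) (Leaf 32) (Node 28 (Leaf 23) (Node 20 (Node 15 (Leaf 37) (Leaf 26) (Leaf 59)) (Leaf 31) (Leaf 90)) (Leaf 19))) (Leaf 15) (Leaf 104))) (Leaf 39)) (Leaf 195) (Leaf 102))) (Leaf 84) (Leaf 158)) (Leaf 41) (Leaf 73)) (Node 7 (Node 28 (Leaf 23) (Node 14 (Leaf 190) (Leaf 48) (Node 32 (Leaf 97) (Node 26 (Leaf 191) (Leaf 194) (Node 0 (Node 27 (Leaf 192) (Leaf 32) (Node 20 (Node 15 (Leaf 37) (Leaf 26) (Leaf 59)) (Leaf 31) (Leaf 90))) (Leaf 193) (Leaf 102))) (Leaf 39))) (Leaf 19)) (Leaf 15) (Leaf 16)))) (Node 38 (Leaf 196) (Leaf 6) (Node 0 (Node 25 (Leaf 197) (Leaf 69) (Node 36 (Leaf 198) (Node 32 (Leaf 97) (Leaf 30) (Node 10 (Node 14 (Node 9 (Leaf 199) (Leaf 43) (Leaf 112)) (Leaf 48) (Leaf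 39)) (Leaf 41) (Leaf 73))) (Node 7 (Node 28 (Leaf 23) (Node 14 (Leaf 190) (Leaf 48) (Node 32 (Leaf 97) (Node 26 (Leaf 191) (Leaf 28) (Node 27 (Leaf 192) (Leaf 32) (Node 20 (Node 15 (Leaf 37) (Leaf 26) (Leaf 59)) (Leaf 31) (Leaf 90)))) (Leaf 39))) (Leaf 19)) (Leaf 15) (Leaf 16)))) (Node 32 (Leaf 97) (Leaf 7) (Node 27 (Node 7 (Leaf 192) (Leaf 15) (Node 39 (Leaf 200) (Leaf 51) (Leaf 50))) (Leaf 83) (Leaf 32))) (Leaf 8))) (Leaf 92)) (Leaf 121))) (Leaf 119))))) (Leaf 2) (Leaf 3)))) (Leaf 160))) (Leaf 176))).
Lemma low0 : lowcert (Sk 0) Ys0 2 35 Tc0 badl0.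
Proof. vm_compute. reflexivity. Qed.

Definition Ys1 : seq tri := [:: mk (-2) 0 1; mk (-2) 0 2; mk (-2) 1 0; mk (-2) 1 1; mk (-1) (-1) 0; mk (-1) (-1) 2; mk (-1) 0 0; mk (-1) 0 2; mk (-1) 1 1; mk (-1) 1 2; mk 0 (-1) 1; mk 0 0 (-1); mk 0 1 (-1); mk 0 2 1; mk 1 (-2) (-1); mk 1 0 1; mk 1 1 0; mk 1 1 2; mk 2 (-1) 1; mk 2 0 (-2); mk 2 0 (-1); mk 2 0 0; mk 2 1 (-2); mk 2 1 (-1)].
Definition badl1 : seq (seq nat * (seq nat * seq tri * seq nat)) := [:: ([:: 8; 22], ([:: 2; 1], [:: mk 0 1 0], [:: 3]));
  ([:: 8; 10], ([:: 1; 1], [:: mk 0 0 1; mk (-1) 0 1], [:: 1; 1]));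
  ([:: 8; 12; 17], ([:: 1; 3; 1], [:: mk 0 1 0], [:: 5]));
  ([:: 10; 12], ([:: 1; 1], [:: mk 0 0 0], [:: 2]));
  ([:: 5; 16], ([:: 1; 1], [:: mk 0 0 1], [:: 2]));
  ([:: 10; 16], ([:: 1; 1], [:: mk 1 0 0; mk 0 0 1], [:: 1; 1]));
  ([:: 2; 15], ([:: 1; 1], [:: mk 0 1 0; mk (-1) 0 1], [:: 1; 1]));
  ([:: 10; 15; 22], ([:: 1; 1; 1], [:: mk 1 0 0], [:: 3]));
  ([:: 12; 15], ([:: 1; 1], [:: mk 1 0 0; mk 0 1 0], [:: 1; 1]));
  ([:: 2; 10; 22], ([:: 1; 2; 1], [:: mk 0 0 0], [:: 4]));
  ([:: 2; 16], ([:: 1; 2], [:: mk 0 1 0], [:: 3]));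
  ([:: 5; 22], ([:: 1; 1], [:: mk 0 0 0; mk 1 0 0], [:: 1; 1]));
  ([:: 5; 12], ([:: 1; 1], [:: mk 0 0 0; mk (-1) 0 1], [:: 1; 1]));
  ([:: 10; 17; 22], ([:: 6; 2; 5], [:: mk 1 0 0; mk 0 1 0], [:: 12; 1]));
  ([:: 4; 9], ([:: 1; 1], [:: mk (-1) 0 1], [:: 2]));
  ([:: 9; 11], ([:: 1; 1], [:: mk 0 1 0; mk (-1) 0 1], [:: 1; 1]));
  ([:: 4; 16], ([:: 1; 1], [:: mk 0 0 0], [:: 2]));
  ([:: 2; 8; 23], ([:: 1; 2; 2], [:: mk 0 1 0], [:: 5]));
  ([:: 10; 23], ([:: 1; 1], [:: mk 1 0 0], [:: 2]));
  ([:: 0; 15], ([:: 2; 1], [:: mk (-1) 0 1], [:: 3]));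
  ([:: 11; 15], ([:: 1; 1], [:: mk 0 0 0; mk 1 0 0], [:: 1; 1]));
  ([:: 0; 10; 22], ([:: 1; 1; 1], [:: mk 0 0 0], [:: 3]));
  ([:: 0; 16], ([:: 1; 1], [:: mk 0 1 0; mk (-1) 0 1], [:: 1; 1]));
  ([:: 3; 10], ([:: 1; 1], [:: mk (-1) 0 1], [:: 2]));
  ([:: 3; 23], ([:: 1; 1], [:: mk 0 1 0], [:: 2]));
  ([:: 2; 12; 17], ([:: 1; 4; 2], [:: mk 0 1 0], [:: 7]));
  ([:: 11; 17], ([:: 2; 1], [:: mk 0 0 0; mk 1 0 0; mk 0 1 0], [:: 1; 1; 1]));
  ([:: 4; 17], ([:: 1; 1], [:: mk 0 0 1], [:: 2]));
  ([:: 9; 10; 22], ([:: 2; 2; 3], [:: mk 1 0 0; mk 0 1 0], [:: 4; 3]));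
  ([:: 8; 14], ([:: 4; 1], [:: mk 0 1 0; mk (-1) 0 1], [:: 2; 3]));
  ([:: 8; 19], ([:: 2; 1], [:: mk 0 0 0; mk 0 1 0], [:: 1; 2]));
  ([:: 9; 12; 16], ([:: 1; 2; 1], [:: mk 0 1 0], [:: 4]));
  ([:: 8; 12; 16], ([:: 1; 1; 1], [:: mk 0 1 0], [:: 3]));
  ([:: 9; 12; 17], ([:: 1; 4; 1], [:: mk 0 1 0], [:: 6]));
  ([:: 9; 19], ([:: 1; 1], [:: mk 1 0 0; mk 0 1 0], [:: 1; 1]));
  ([:: 9; 14], ([:: 2; 1], [:: mk 0 0 1; mk (-1) 0 1], [:: 2; 1]));
  ([:: 3; 12; 16], ([:: 1; 1; 2], [:: mk 0 1 0], [:: 4]));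
  ([:: 7; 12], ([:: 1; 1], [:: mk 0 1 0; mk (-1) 0 1], [:: 1; 1]));
  ([:: 7; 22], ([:: 1; 1], [:: mk 1 0 0; mk 0 1 0], [:: 1; 1]));
  ([:: 3; 20], ([:: 1; 1], [:: mk 0 0 0; mk 0 1 0], [:: 1; 1]));
  ([:: 6; 17], ([:: 3; 1], [:: mk 0 0 0; mk 0 1 0; mk (-1) 0 1], [:: 1; 1; 2]));
  ([:: 7; 11], ([:: 1; 1], [:: mk 0 0 0; mk (-1) 0 1], [:: 1; 1]));
  ([:: 14; 16; 17], ([:: 2; 3; 1], [:: mk 1 0 0], [:: 6]));
  ([:: 4; 13], ([:: 1; 1], [:: mk 0 1 0; mk (-1) 0 1], [:: 1; 1]));
  ([:: 13; 14], ([:: 1; 1], [:: mk 0 0 0; mk 1 0 0], [:: 1; 1]));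
  ([:: 10; 13], ([:: 2; 1], [:: mk 0 0 1], [:: 3]));
  ([:: 7; 19], ([:: 1; 1], [:: mk 0 0 0; mk 1 0 0], [:: 1; 1]));
  ([:: 7; 20], ([:: 1; 2], [:: mk 1 0 0], [:: 3]));
  ([:: 6; 16], ([:: 1; 1], [:: mk 0 0 0; mk 0 1 0], [:: 1; 1]));
  ([:: 6; 7], ([:: 1; 1], [:: mk (-1) 0 1], [:: 2]));
  ([:: 2; 7; 10], ([:: 1; 1; 1], [:: mk (-1) 0 1], [:: 3]));
  ([:: 3; 18], ([:: 1; 1], [:: mk 0 0 1], [:: 2]));
  ([:: 12; 18], ([:: 1; 1], [:: mk 1 0 0], [:: 2]));
  ([:: 6; 15], ([:: 2; 1], [:: mk 0 0 0; mk (-1) 0 1], [:: 2; 1]));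
  ([:: 0; 23], ([:: 1; 1], [:: mk 0 0 0; mk 0 1 0], [:: 1; 1]));
  ([:: 3; 21], ([:: 1; 1], [:: mk 0 1 0; mk 0 0 1], [:: 1; 1]));
  ([:: 2; 21], ([:: 1; 1], [:: mk 0 0 0; mk 0 1 0], [:: 1; 1]));
  ([:: 0; 21], ([:: 2; 1], [:: mk 0 0 0; mk (-1) 0 1], [:: 1; 2]));
  ([:: 2; 18], ([:: 3; 2], [:: mk 0 0 0; mk 0 1 0; mk (-1) 0 1], [:: 2; 1; 2]));
  ([:: 9; 12; 22], ([:: 2; 2; 1], [:: mk 0 1 0], [:: 5]));
  ([:: 0; 20], ([:: 1; 1], [:: mk 0 0 0], [:: 2]));
  ([:: 6; 9; 10], ([:: 3; 2; 1], [:: mk 0 1 0; mk (-1) 0 1], [:: 1; 5]));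
  ([:: 9; 10; 20], ([:: 1; 1; 3], [:: mk 1 0 0], [:: 5]));
  ([:: 8; 20], ([:: 1; 1], [:: mk 1 0 0; mk 0 1 0], [:: 1; 1]));
  ([:: 1; 23], ([:: 1; 1], [:: mk 0 1 0; mk 0 0 1], [:: 1; 1]));
  ([:: 1; 22], ([:: 1; 1], [:: mk 0 0 0; mk 0 1 0], [:: 1; 1]));
  ([:: 1; 20], ([:: 1; 2], [:: mk 0 0 0; mk 1 0 0], [:: 1; 2]));
  ([:: 3; 16; 22], ([:: 2; 2; 1], [:: mk 0 1 0], [:: 5]))].
Definition Tc1 : ctree := (Node 22 (Leaf 0) (Node 10 (Leaf 1) (Node 9 (Node 17 (Node 12 (Leaf 2) (Leaf 3) (Node 5 (Node 16 (Leaf 4) (Leaf 5) (Node 2 (Node 15 (Leaf 6) (Leaf 7) (Leaf 8)) (Leaf 9) (Leaf 10))) (Leaf 11) (Leaf 12))) (Leaf 13) (Node 4 (Leaf 14) (Node 11 (Leaf 15) (Node 2 (Node 16 (Leaf 10) (Leaf 16) (Node 23 (Leaf 17) (Leaf 18) (Node 3 (Node 0 (Node 5 (Node 12 (Leaf 12) (Leaf 3) (Node 15 (Leaf 19) (Leaf 20) (Leaf 8))) (Leaf 11) (Leaf 4)) (Leaf 21) (Leaf 22)) (Leaf 23) (Leaf 24)))) (Leaf 9) (Node 12 (Node 15 (Leaf 8) (Leaf 20) (Leaf 6)) (Leaf 3) (Leaf 25))) (Leaf 26)) (Leaf 27))) (Leaf 28) (Node 14 (Leaf 29) (Node 19 (Leaf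 30) (Node 17 (Node 12 (Leaf 2) (Leaf 3) (Node 16 (Node 5 (Leaf 4) (Leaf 11) (Leaf 12)) (Leaf 5) (Leaf 31))) (Leaf 13) (Node 12 (Node 16 (Leaf 32) (Leaf 5) (Node 5 (Leaf 12) (Leaf 11) (Leaf 4))) (Leaf 3) (Leaf 33))) (Leaf 34)) (Leaf 35))) (Node 3 (Node 23 (Leaf 24) (Node 12 (Node 16 (Leaf 36) (Node 5 (Leaf 12) (Leaf 4) (Node 7 (Leaf 37) (Leaf 38) (Node 2 (Node 6 (Node 20 (Leaf 39) (Node 19 (Leaf 30) (Node 9 (Node 4 (Leaf 14) (Leaf 16) (Node 17 (Leaf 40) (Node 11 (Leaf 15) (Leaf 26) (Leaf 41)) (Leaf 27))) (Leaf 34) (Node 14 (Leaf 29) (Node 17 (Leaf 40) (Leaf 42) (Node 13 (Node 4 (Leaf 43) (Leaf 16) (Leaf 14)) (Leaf 44) (Leaf 45))) (Leaf 35))) (Leaf 46)) (Leaf 47)) (Leaf 48) (Leaf 49)) (Leaf 10) (Leaf 50)))) (Leaf 5)) (Node 18 (Leaf 51) (Leaf 52) (Node 9 (Node 2 (Node 16 (Leaf 10) (Node 4 (Leaf 14) (Leaf 16) (Node 15 (Leaf 6) (Leaf 8) (Node 6 (Node 17 (Leaf 40) (Node 11 (Leaf 15) (Leaf 26) (Leaf 20)) (Leaf 27)) (Leaf 48) (Leaf 53)))) (Leaf 5)) (Node 16 (Node 0 (Leaf 22) (Leaf 54) (Node 21 (Leaf 55) (Leaf 56) (Leaf 57)))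 (Leaf 10) (Leaf 5)) (Leaf 58)) (Leaf 59) (Node 14 (Leaf 29) (Node 13 (Node 20 (Leaf 39) (Node 19 (Leaf 30) (Node 4 (Leaf 43) (Node 16 (Node 2 (Leaf 10) (Node 6 (Leaf 48) (Node 0 (Leaf 22) (Leaf 60) (Node 21 (Leaf 55) (Leaf 56) (Leaf 57))) (Leaf 61)) (Leaf 58)) (Leaf 16) (Leaf 5)) (Leaf 14)) (Leaf 34)) (Leaf 62)) (Leaf 44) (Leaf 45)) (Leaf 35)))) (Leaf 3)) (Leaf 18)) (Node 16 (Node 12 (Leaf 32) (Node 23 (Node 5 (Leaf 4) (Leaf 12) (Node 20 (Leaf 63) (Leaf 39) (Node 1 (Leaf 64) (Leaf 65) (Leaf 66)))) (Leaf 24) (Leaf 18)) (Leaf 3)) (Leaf 67) (Leaf 5)) (Leaf 23))) (Node 10 (Leaf 1) (Node 3 (Node 23 (Leaf 24) (Leaf 18) (Node 12 (Node 16 (Leaf 36) (Leaf 5) (Node 5 (Leaf 12) (Node 7 (Leaf 37) (Node 2 (Node 6 (Node 20 (Leaf 39) (Leaf 47) (Node 19 (Leaf 30) (Leaf 46) (Node 9 (Node 4 (Leaf 14) (Node 17 (Leaf 40) (Leaf 27) (Node 11 (Leaf 15) (Leaf 41) (Leaf 26))) (Leaf 16)) (Node 14 (Leaf 29) (Leaf 35) (Node 17 (Leaf 40) (Node 13 (Node 4 (Leaf 43) (Leaf 14) (Leaf 16)) (Leaf 45) (Leaf 44)) (Leaf 42))) (Leaf 34)))) (Leaf 49) (Leaf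 48)) (Leaf 50) (Leaf 10)) (Leaf 38)) (Leaf 4))) (Leaf 3) (Node 18 (Leaf 51) (Node 9 (Node 2 (Node 16 (Leaf 10) (Leaf 5) (Node 4 (Leaf 14) (Node 15 (Leaf 6) (Node 6 (Node 17 (Leaf 40) (Leaf 27) (Node 11 (Leaf 15) (Leaf 20) (Leaf 26))) (Leaf 53) (Leaf 48)) (Leaf 8)) (Leaf 16))) (Leaf 58) (Node 16 (Node 0 (Leaf 22) (Node 21 (Leaf 55) (Leaf 57) (Leaf 56)) (Leaf 54)) (Leaf 5) (Leaf 10))) (Node 14 (Leaf 29) (Leaf 35) (Node 13 (Node 20 (Leaf 39) (Leaf 62) (Node 19 (Leaf 30) (Leaf 34) (Node 4 (Leaf 43) (Leaf 14) (Node 16 (Node 2 (Leaf 10) (Leaf 58) (Node 6 (Leaf 48) (Leaf 61) (Node 0 (Leaf 22) (Node 21 (Leaf 55) (Leaf 57) (Leaf 56)) (Leaf 60)))) (Leaf 5) (Leaf 16))))) (Leaf 45) (Leaf 44))) (Leaf 59)) (Leaf 52)))) (Leaf 23) (Node 16 (Node 12 (Leaf 32) (Leaf 3) (Node 23 (Node 5 (Leaf 4) (Node 20 (Leaf 63) (Node 1 (Leaf 64) (Leaf 66) (Leaf 65)) (Leaf 39)) (Leaf 12)) (Leaf 18) (Leaf 24))) (Leaf 5) (Leaf 67))) (Node 9 (Node 17 (Node 12 (Leaf 2) (Node 5 (Node 16 (Leaf 4) (Node 2 (Node 15 (Leaf 6) (Leaf 8) (Leaf 7)) (Leaf 10) (Leaf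 9)) (Leaf 5)) (Leaf 12) (Leaf 11)) (Leaf 3)) (Node 4 (Leaf 14) (Leaf 27) (Node 11 (Leaf 15) (Leaf 26) (Node 2 (Node 16 (Leaf 10) (Node 23 (Leaf 17) (Node 3 (Node 0 (Node 5 (Node 12 (Leaf 12) (Node 15 (Leaf 19) (Leaf 8) (Leaf 20)) (Leaf 3)) (Leaf 4) (Leaf 11)) (Leaf 22) (Leaf 21)) (Leaf 24) (Leaf 23)) (Leaf 18)) (Leaf 16)) (Node 12 (Node 15 (Leaf 8) (Leaf 6) (Leaf 20)) (Leaf 25) (Leaf 3)) (Leaf 9)))) (Leaf 13)) (Node 14 (Leaf 29) (Leaf 35) (Node 19 (Leaf 30) (Leaf 34) (Node 17 (Node 12 (Leaf 2) (Node 16 (Node 5 (Leaf 4) (Leaf 12) (Leaf 11)) (Leaf 31) (Leaf 5)) (Leaf 3)) (Node 12 (Node 16 (Leaf 32) (Node 5 (Leaf 12) (Leaf 4) (Leaf 11)) (Leaf 5)) (Leaf 33) (Leaf 3)) (Leaf 13)))) (Leaf 28)))).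
Lemma low1 : lowcert (Sk 1) Ys1 2 8 Tc1 badl1.
Proof. vm_compute. reflexivity. Qed.

Definition Ys2 : seq tri := [:: mk (-2) 0 0; mk (-2) 0 1; mk (-2) 1 0; mk (-2) 1 1; mk (-1) 1 (-1); mk 0 (-1) 1; mk 0 1 (-1); mk 0 1 1; mk 1 1 (-1); mk 1 1 0; mk 2 (-1) 1; mk 2 0 0; mk 2 0 1].
Definition badl2 : seq (seq nat * (seq nat * seq tri * seq nat)) := [:: ([:: 3; 5], ([:: 1; 1], [:: mk (-1) 0 1], [:: 2]));
  ([:: 3; 8], ([:: 1; 1], [:: mk 0 1 0; mk (-1) 1 0], [:: 1; 1]));
  ([:: 5; 8], ([:: 1; 1], [:: mk 0 0 0; mk 1 0 0], [:: 1; 1]));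
  ([:: 3; 6], ([:: 1; 1], [:: mk (-1) 1 0], [:: 2]));
  ([:: 5; 6], ([:: 1; 1], [:: mk 0 0 0], [:: 2]));
  ([:: 3; 10], ([:: 1; 1], [:: mk 0 0 1], [:: 2]));
  ([:: 4; 7], ([:: 1; 1], [:: mk 0 1 0; mk (-1) 1 0], [:: 1; 1]));
  ([:: 4; 10], ([:: 1; 1], [:: mk 0 0 0; mk 1 0 0], [:: 1; 1]));
  ([:: 0; 7], ([:: 1; 1], [:: mk (-1) 0 1; mk (-1) 1 0], [:: 1; 1]));
  ([:: 3; 11], ([:: 1; 1], [:: mk 0 1 0; mk 0 0 1], [:: 1; 1]));
  ([:: 0; 11], ([:: 1; 3], [:: mk 1 0 0], [:: 4]));
  ([:: 2; 12], ([:: 1; 1], [:: mk 0 1 0; mk 0 0 1], [:: 1; 1]));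
  ([:: 0; 12], ([:: 2; 3], [:: mk 1 0 0; mk 0 0 1], [:: 2; 3]));
  ([:: 4; 12], ([:: 1; 1], [:: mk 1 0 0; mk 0 1 0], [:: 1; 1]));
  ([:: 2; 10], ([:: 1; 1], [:: mk 0 0 0; mk 0 0 1], [:: 1; 1]));
  ([:: 2; 11], ([:: 1; 2], [:: mk 1 0 0; mk 0 1 0], [:: 2; 1]));
  ([:: 1; 9], ([:: 1; 2], [:: mk 0 1 0; mk 0 0 1], [:: 2; 1]));
  ([:: 1; 11], ([:: 1; 2], [:: mk 1 0 0; mk 0 0 1], [:: 2; 1]));
  ([:: 1; 8], ([:: 1; 1], [:: mk 0 0 0; mk (-1) 1 0], [:: 1; 1]));
  ([:: 5; 9], ([:: 1; 1], [:: mk 1 0 0; mk 0 0 1], [:: 1; 1]));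
  ([:: 0; 9], ([:: 1; 3], [:: mk 1 0 0; mk 0 1 0], [:: 1; 3]));
  ([:: 6; 10], ([:: 1; 1], [:: mk 1 0 0], [:: 2]));
  ([:: 5; 7], ([:: 1; 1], [:: mk 0 0 1], [:: 2]));
  ([:: 6; 7], ([:: 1; 1], [:: mk 0 1 0], [:: 2]))].
Definition Tc2 : ctree := (Node 5 (Leaf 0) (Node 8 (Leaf 1) (Leaf 2) (Node 6 (Leaf 3) (Leaf 4) (Node 7 (Node 10 (Leaf 5) (Node 4 (Leaf 6) (Leaf 7) (Node 0 (Leaf 8) (Node 11 (Leaf 9) (Leaf 10) (Node 2 (Node 12 (Leaf 11) (Leaf 12) (Leaf 13)) (Leaf 14) (Leaf 15))) (Node 9 (Node 1 (Leaf 16) (Node 11 (Leaf 9) (Leaf 17) (Leaf 10)) (Leaf 18)) (Leaf 19) (Leaf 20)))) (Leaf 21)) (Leaf 22) (Leaf 23)))) (Node 8 (Leaf 1) (Node 6 (Leaf 3) (Node 7 (Node 10 (Leaf 5) (Leaf 21) (Node 4 (Leaf 6) (Node 0 (Leaf 8) (Node 9 (Node 1 (Leaf 16) (Leaf 18) (Node 11 (Leaf 9) (Leaf 10) (Leaf 17))) (Leaf 20) (Leaf 19)) (Node 11 (Leaf 9) (Node 2 (Node 12 (Leaf 11) (Leaf 13) (Leaf 12)) (Leaf 15) (Leaf 14)) (Leaf 10))) (Leaf 7))) (Leaf 23) (Leaf 22)) (Leaf 4)) (Leaf 2))).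
Lemma low2 : lowcert (Sk 2) Ys2 2 3 Tc2 badl2.
Proof. vm_compute. reflexivity. Qed.

Definition Ys3 : seq tri := [:: mk (-2) (-1) 1; mk (-2) 0 1; mk (-2) 2 1; mk (-1) (-2) 2; mk (-1) (-1) 2; mk (-1) 2 (-1); mk (-1) 2 0; mk 0 (-2) 2; mk 0 1 (-1); mk 0 1 1; mk 1 (-2) 0; mk 1 2 0; mk 2 (-2) 1; mk 2 (-1) (-1); mk 2 (-1) 1; mk 2 0 (-1); mk 2 1 (-1); mk 2 2 (-2)].
Definition badl3 : seq (seq nat * (seq nat * seq tri * seq nat)) := [:: ([:: 1; 14], ([:: 2; 1], [:: mk (-1) 0 1; mk 0 (-1) 1], [:: 2; 1]));
  ([:: 4; 5], ([:: 2; 1], [:: mk (-1) 0 1], [:: 3]));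
  ([:: 1; 15], ([:: 1; 1], [:: mk 0 0 0], [:: 2]));
  ([:: 4; 15], ([:: 1; 1], [:: mk 1 0 0; mk 0 (-1) 1], [:: 1; 1]));
  ([:: 1; 16], ([:: 1; 1], [:: mk 0 0 0; mk 0 1 0], [:: 1; 1]));
  ([:: 4; 16], ([:: 1; 1], [:: mk 1 0 0; mk 0 0 1], [:: 1; 1]));
  ([:: 3; 6], ([:: 1; 1], [:: mk (-1) 0 1], [:: 2]));
  ([:: 4; 6; 14], ([:: 1; 1; 1], [:: mk 0 0 1], [:: 3]));
  ([:: 5; 7], ([:: 1; 1], [:: mk 0 0 0; mk (-1) 0 1], [:: 1; 1]));
  ([:: 1; 12], ([:: 1; 1], [:: mk 0 (-1) 1], [:: 2]));
  ([:: 2; 13], ([:: 1; 1], [:: mk 0 0 0; mk 0 1 0], [:: 1; 1]));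
  ([:: 4; 13], ([:: 2; 1], [:: mk 0 (-1) 1], [:: 3]));
  ([:: 0; 9], ([:: 1; 1], [:: mk (-1) 0 1], [:: 2]));
  ([:: 2; 10], ([:: 1; 1], [:: mk 0 0 0; mk (-1) 0 1], [:: 1; 1]));
  ([:: 9; 10], ([:: 1; 1], [:: mk 1 0 0; mk 0 (-1) 1], [:: 1; 1]));
  ([:: 6; 10], ([:: 1; 1], [:: mk 0 0 0], [:: 2]));
  ([:: 9; 13], ([:: 1; 1], [:: mk 1 0 0], [:: 2]));
  ([:: 2; 12], ([:: 1; 1], [:: mk 0 0 1], [:: 2]));
  ([:: 2; 15], ([:: 1; 1], [:: mk 0 1 0], [:: 2]));
  ([:: 6; 12], ([:: 2; 1], [:: mk 0 1 0; mk 0 0 1], [:: 2; 1]));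
  ([:: 6; 7], ([:: 1; 1], [:: mk 0 0 1; mk (-1) 0 1], [:: 1; 1]));
  ([:: 0; 11], ([:: 1; 1], [:: mk 0 1 0; mk (-1) 0 1], [:: 1; 1]));
  ([:: 3; 11], ([:: 1; 1], [:: mk 0 0 1], [:: 2]));
  ([:: 10; 11], ([:: 1; 1], [:: mk 1 0 0], [:: 2]));
  ([:: 4; 8], ([:: 1; 1], [:: mk 0 0 0; mk (-1) 0 1], [:: 1; 1]));
  ([:: 8; 9], ([:: 1; 1], [:: mk 0 1 0], [:: 2]));
  ([:: 3; 16], ([:: 1; 2], [:: mk 1 0 0], [:: 3]));
  ([:: 0; 14], ([:: 1; 1], [:: mk 0 (-1) 1], [:: 2]));
  ([:: 0; 16], ([:: 1; 1], [:: mk 0 0 0], [:: 2]));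
  ([:: 3; 17], ([:: 1; 1], [:: mk 0 0 0; mk 1 0 0], [:: 1; 1]));
  ([:: 7; 17], ([:: 1; 1], [:: mk 1 0 0], [:: 2]));
  ([:: 6; 13; 14], ([:: 4; 1; 1], [:: mk 0 1 0], [:: 6]));
  ([:: 4; 17], ([:: 1; 1], [:: mk 1 0 0; mk 0 1 0], [:: 1; 1]));
  ([:: 1; 11; 13], ([:: 4; 3; 1], [:: mk 0 1 0; mk (-1) 0 1], [:: 5; 3]));
  ([:: 8; 14], ([:: 1; 1], [:: mk 1 0 0], [:: 2]));
  ([:: 5; 14], ([:: 1; 1], [:: mk 1 0 0; mk 0 1 0], [:: 1; 1]));
  ([:: 3; 9; 15], ([:: 1; 2; 4], [:: mk 1 0 0], [:: 7]));
  ([:: 5; 12], ([:: 1; 1], [:: mk 0 0 0; mk 1 0 0], [:: 1; 1]))].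
Definition Tc3 : ctree := (Node 14 (Leaf 0) (Node 5 (Node 4 (Leaf 1) (Node 15 (Leaf 2) (Leaf 3) (Node 16 (Leaf 4) (Leaf 5) (Node 0 (Node 3 (Node 6 (Leaf 6) (Leaf 7) (Node 7 (Leaf 8) (Node 12 (Leaf 9) (Node 2 (Node 13 (Leaf 10) (Leaf 11) (Node 9 (Leaf 12) (Node 10 (Leaf 13) (Leaf 14) (Leaf 15)) (Leaf 16))) (Leaf 17) (Leaf 18)) (Leaf 19)) (Leaf 20))) (Node 11 (Leaf 21) (Leaf 22) (Node 9 (Leaf 12) (Node 10 (Node 6 (Leaf 15) (Leaf 6) (Node 7 (Leaf 8) (Node 2 (Leaf 13) (Node 12 (Leaf 9) (Leaf 17) (Leaf 19)) (Leaf 18)) (Leaf 20))) (Leaf 14) (Leaf 23)) (Node 8 (Node 13 (Node 2 (Leaf 10) (Node 12 (Leaf 9) (Leaf 17) (Node 6 (Node 10 (Leaf 15) (Leaf 13) (Leaf 14)) (Leaf 6) (Leaf 19))) (Leaf 18)) (Leaf 11) (Leaf 16)) (Leaf 24) (Leaf 25)))) (Leaf 26)) (Leaf 27) (Leaf 28)))) (Node 8 (Node 15 (Leaf 2) (Node 16 (Leaf 4) (Node 3 (Node 17 (Leaf 29) (Node 7 (Leaf 8) (Leaf 30) (Node 6 (Leaf 6) (Node 12 (Leaf 9) (Leaf 19) (Node 2 (Node 13 (Leaf 10) (Leaf 31) (Leaf 11)) (Leaf 18) (Leaf 17))) (Leaf 20))) (Leaf 32)) (Leaf 26) (Node 9 (Leaf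 25) (Node 13 (Node 11 (Leaf 33) (Node 2 (Leaf 10) (Leaf 18) (Node 12 (Leaf 9) (Node 6 (Node 10 (Leaf 15) (Leaf 14) (Leaf 13)) (Leaf 19) (Leaf 6)) (Leaf 17))) (Leaf 22)) (Leaf 16) (Leaf 11)) (Node 0 (Node 11 (Leaf 21) (Node 10 (Node 6 (Leaf 15) (Node 7 (Leaf 8) (Leaf 20) (Node 2 (Leaf 13) (Leaf 18) (Node 12 (Leaf 9) (Leaf 19) (Leaf 17)))) (Leaf 6)) (Leaf 23) (Leaf 14)) (Leaf 22)) (Leaf 27) (Leaf 12)))) (Leaf 5)) (Leaf 3)) (Leaf 34) (Leaf 24))) (Leaf 35) (Node 12 (Leaf 9) (Node 4 (Node 8 (Leaf 24) (Leaf 34) (Node 9 (Node 0 (Leaf 12) (Leaf 27) (Node 16 (Leaf 4) (Node 3 (Node 6 (Leaf 6) (Leaf 19) (Node 11 (Leaf 22) (Node 10 (Leaf 14) (Leaf 23) (Leaf 15)) (Leaf 21))) (Leaf 26) (Node 6 (Node 7 (Leaf 20) (Node 17 (Leaf 32) (Leaf 30) (Leaf 29)) (Leaf 8)) (Leaf 19) (Leaf 6))) (Leaf 28))) (Node 13 (Leaf 11) (Leaf 16) (Node 2 (Node 10 (Leaf 13) (Leaf 14) (Node 6 (Node 7 (Leaf 20) (Node 17 (Leaf 32) (Leaf 30) (Node 3 (Leaf 6) (Node 11 (Node 15 (Leaf 2) (Leaf 36) (Node 16 (Leaf 4) (Leaf 26) (Node 0 (Leaf 21) (Leaf 12) (Leaf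 28)))) (Leaf 22) (Leaf 23)) (Leaf 29))) (Leaf 8)) (Leaf 19) (Leaf 15))) (Leaf 17) (Leaf 10))) (Leaf 25))) (Node 15 (Leaf 2) (Leaf 3) (Node 2 (Node 13 (Leaf 10) (Leaf 11) (Node 16 (Leaf 4) (Leaf 5) (Node 0 (Node 9 (Leaf 12) (Node 10 (Leaf 13) (Leaf 14) (Node 6 (Node 3 (Leaf 6) (Node 11 (Leaf 21) (Leaf 22) (Leaf 23)) (Leaf 26)) (Leaf 19) (Leaf 15))) (Leaf 16)) (Leaf 27) (Leaf 28)))) (Leaf 17) (Leaf 18))) (Leaf 1)) (Leaf 37))) (Node 5 (Node 4 (Leaf 1) (Node 8 (Node 15 (Leaf 2) (Leaf 3) (Node 16 (Leaf 4) (Leaf 5) (Node 3 (Node 17 (Leaf 29) (Leaf 32) (Node 7 (Leaf 8) (Node 6 (Leaf 6) (Leaf 20) (Node 12 (Leaf 9) (Node 2 (Node 13 (Leaf 10) (Leaf 11) (Leaf 31)) (Leaf 17) (Leaf 18)) (Leaf 19))) (Leaf 30))) (Node 9 (Leaf 25) (Node 0 (Node 11 (Leaf 21) (Leaf 22) (Node 10 (Node 6 (Leaf 15) (Leaf 6) (Node 7 (Leaf 8) (Node 2 (Leaf 13) (Node 12 (Leaf 9) (Leaf 17) (Leaf 19)) (Leaf 18)) (Leaf 20))) (Leaf 14) (Leaf 23))) (Leaf 12) (Leaf 27)) (Node 13 (Node 11 (Leaf 33) (Leaf 22) (Node 2 (Leaf 10) (Node 12 (Leaf 9) (Leaf 17)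 (Node 6 (Node 10 (Leaf 15) (Leaf 13) (Leaf 14)) (Leaf 6) (Leaf 19))) (Leaf 18))) (Leaf 11) (Leaf 16))) (Leaf 26)))) (Leaf 24) (Leaf 34)) (Node 15 (Leaf 2) (Node 16 (Leaf 4) (Node 0 (Node 3 (Node 6 (Leaf 6) (Node 7 (Leaf 8) (Leaf 20) (Node 12 (Leaf 9) (Leaf 19) (Node 2 (Node 13 (Leaf 10) (Node 9 (Leaf 12) (Leaf 16) (Node 10 (Leaf 13) (Leaf 15) (Leaf 14))) (Leaf 11)) (Leaf 18) (Leaf 17)))) (Leaf 7)) (Leaf 26) (Node 11 (Leaf 21) (Node 9 (Leaf 12) (Node 8 (Node 13 (Node 2 (Leaf 10) (Leaf 18) (Node 12 (Leaf 9) (Node 6 (Node 10 (Leaf 15) (Leaf 14) (Leaf 13)) (Leaf 19) (Leaf 6)) (Leaf 17))) (Leaf 16) (Leaf 11)) (Leaf 25) (Leaf 24)) (Node 10 (Node 6 (Leaf 15) (Node 7 (Leaf 8) (Leaf 20) (Node 2 (Leaf 13) (Leaf 18) (Node 12 (Leaf 9) (Leaf 19) (Leaf 17)))) (Leaf 6)) (Leaf 23) (Leaf 14))) (Leaf 22))) (Leaf 28) (Leaf 27)) (Leaf 5)) (Leaf 3))) (Node 12 (Leaf 9) (Leaf 37) (Node 4 (Node 8 (Leaf 24) (Node 9 (Node 0 (Leaf 12) (Node 16 (Leaf 4) (Leaf 28) (Node 3 (Node 6 (Leaf 6) (Node 11 (Leaf 22) (Leaf 21) (Node 10 (Leaf 14)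 (Leaf 15) (Leaf 23))) (Leaf 19)) (Node 6 (Node 7 (Leaf 20) (Leaf 8) (Node 17 (Leaf 32) (Leaf 29) (Leaf 30))) (Leaf 6) (Leaf 19)) (Leaf 26))) (Leaf 27)) (Leaf 25) (Node 13 (Leaf 11) (Node 2 (Node 10 (Leaf 13) (Node 6 (Node 7 (Leaf 20) (Leaf 8) (Node 17 (Leaf 32) (Node 3 (Leaf 6) (Leaf 29) (Node 11 (Node 15 (Leaf 2) (Node 16 (Leaf 4) (Node 0 (Leaf 21) (Leaf 28) (Leaf 12)) (Leaf 26)) (Leaf 36)) (Leaf 23) (Leaf 22))) (Leaf 30))) (Leaf 15) (Leaf 19)) (Leaf 14)) (Leaf 10) (Leaf 17)) (Leaf 16))) (Leaf 34)) (Leaf 1) (Node 15 (Leaf 2) (Node 2 (Node 13 (Leaf 10) (Node 16 (Leaf 4) (Node 0 (Node 9 (Leaf 12) (Leaf 16) (Node 10 (Leaf 13) (Node 6 (Node 3 (Leaf 6) (Leaf 26) (Node 11 (Leaf 21) (Leaf 23) (Leaf 22))) (Leaf 15) (Leaf 19)) (Leaf 14))) (Leaf 28) (Leaf 27)) (Leaf 5)) (Leaf 11)) (Leaf 18) (Leaf 17)) (Leaf 3)))) (Leaf 35))).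
Lemma low3 : lowcert (Sk 3) Ys3 2 1 Tc3 badl3.
Proof. vm_compute. reflexivity. Qed.

Theorem lemma3p1 (R : realType) (X : zset) :
  @lattice_convex R X ->
  (forall z, Delta3 z -> X z) ->
  (forall z, X z -> T3 z) ->
  @max_vol_simplex R X (delta_vertices R) ->
  (unimod_equiv X (seqset S1) \/ unimod_equiv X (seqset S2) \/
   unimod_equiv X (seqset S3) \/ unimod_equiv X (seqset S4)) /\
  (forall S, S \in [:: S1; S2; S3; S4] ->
     @rcl_is R (seqset S) 4 /\ @rc_is R (seqset S) 4).
Proof.
move=> _ HD HT Hmax; split.
  have [k Hk HU] := @classify R X HD HT Hmax.
  case: k Hk HU => [|[|[|[|//]]]] _ HU.
  - by left.
  - by right; left.
  - by right; right; left.
  - by right; right; right.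
move=> S; rewrite S_eq => /mapP [k Hk ->].
move: Hk; rewrite mem_iota; case: k => [|[|[|[|//]]]] _.
- exact: (@rc_all R (Sk 0) L0 2 35 Tc0 Ys0 badl0 erefl (@up0_in) (@up0_out) isT low0).
- exact: (@rc_all R (Sk 1) L1 2 8 Tc1 Ys1 badl1 erefl (@up1_in) (@up1_out) isT low1).
- exact: (@rc_all R (Sk 2) L2 2 3 Tc2 Ys2 badl2 erefl (@up2_in) (@up2_out) isT low2).
- exact: (@rc_all R (Sk 3) L3 2 1 Tc3 Ys3 badl3 erefl (@up3_in) (@up3_out) isT low3).
Qed.
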